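(* For real $m>0$ and $\epsilon$ with $m+2\epsilon>2$ and $\epsilon<2$, and $d=4+m/2-\epsilon$, define $$\Phi_{m,d}(v)=\frac{1}{2^{2+m}\pi^{(6+m-2\epsilon)/4}}\Bigg[\frac{\Gamma(1-\epsilon/2)}{\Gamma[(m+2)/4]}\,{}_1F_2\Big(1-\tfrac{\epsilon}{2};\tfrac12,\tfrac{m+2}{4};\tfrac{v^4}{64}\Big)-\frac{v^2\,\Gamma[(3-\epsilon)/2]}{4\,\Gamma(1+m/4)}\,{}_1F_2\Big(\tfrac{3-\epsilon}{2};\tfrac32,1+\tfrac{m}{4};\tfrac{v^4}{64}\Big)\Bigg].$$ Then for all real $v$, $$\Phi_{m,4+m/2-\epsilon}(v)=\frac{2^{-m-1}\pi^{(2\epsilon-6-m)/4}}{\Gamma[(m-2+2\epsilon)/4]}\int_0^1 dt\,t^{1-\epsilon}(1-t^2)^{(m-6+2\epsilon)/4}\,e^{-tv^2/4}.$$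
   Context: ${}_1F_2$ denotes the generalized hypergeometric function. $\Phi_{m,d}$ is the scaling function of the free Lifshitz-point propagator: the inverse Fourier transform of $(p^2+k^4)^{-1}$, $(\bm k,\bm p)\in\mathbb{R}^m\times\mathbb{R}^{d-m}$, equals $r^{-2+\epsilon}\Phi_{m,d}(z r^{-1/2})$ with $z=|\bm z|$, $r=|\bm r|$. *)

(* Defs.v *)
From Stdlib Require Import Reals Lra ClassicalEpsilon.
Open Scope R_scope.

Definition improper_int_0_1 (f : R -> R) (l : R) : Prop :=
  forall eps, 0 < eps -> exists delta, 0 < delta /\
    forall a b, 0 < a < delta -> 1 - delta < b < 1 ->
      exists pr : Riemann_integrable f a b, Rabs (RiemannInt pr - l) < eps.

Definition improper_int_0_inf (f : R -> R) (l : R) : Prop :=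
  forall eps, 0 < eps -> exists delta M, 0 < delta /\
    forall a b, 0 < a < delta -> M < b ->
      exists pr : Riemann_integrable f a b, Rabs (RiemannInt pr - l) < eps.

Definition Gamma (x : R) : R :=
  epsilon (inhabits 0)
    (fun l => improper_int_0_inf (fun t => Rpower t (x - 1) * exp (- t)) l).

Fixpoint poch (a : R) (k : nat) : R :=
  match k with
  | O => 1
  | S k' => poch a k' * (a + INR k')
  end.

Definition hyp1F2 (a b1 b2 z : R) : R :=
  epsilon (inhabits 0)
    (fun l => infinite_sum
       (fun k => poch a k / (poch b1 k * poch b2 k) * z ^ k / INR (Factorial.fact k)) l).

Definition Phi (m eps v : R) : R :=
  / (Rpower 2 (2 + m) * Rpower PI ((6 + m - 2 * eps) / 4)) *
  ( Gamma (1 - eps / 2) / Gamma ((m + 2) / 4)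
      * hyp1F2 (1 - eps / 2) (1 / 2) ((m + 2) / 4) (v ^ 4 / 64)
    - v ^ 2 * Gamma ((3 - eps) / 2) / (4 * Gamma (1 + m / 4))
      * hyp1F2 ((3 - eps) / 2) (3 / 2) (1 + m / 4) (v ^ 4 / 64) ).

(* Main.v *)
Require Import Defs.
From Stdlib Require Import Reals Lra Lia ClassicalEpsilon FunctionalExtensionality Classical Factorial ZArith.
Open Scope R_scope.

Lemma D_plus f g x a b : derivable_pt_lim f x a -> derivable_pt_lim g x b ->
  derivable_pt_lim (fun t => f t + g t) x (a + b).
Proof. intros; apply (derivable_pt_lim_plus f g); auto. Qed.
Lemma D_minus f g x a b : derivable_pt_lim f x a -> derivable_pt_lim g x b ->
  derivable_pt_lim (fun t => f t - g t) x (a - b).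
Proof. intros; apply (derivable_pt_lim_minus f g); auto. Qed.
Lemma D_mult f g x a b : derivable_pt_lim f x a -> derivable_pt_lim g x b ->
  derivable_pt_lim (fun t => f t * g t) x (a * g x + f x * b).
Proof. intros; apply (derivable_pt_lim_mult f g); auto. Qed.
Lemma D_comp f g x a b : derivable_pt_lim f x a -> derivable_pt_lim g (f x) b ->
  derivable_pt_lim (fun t => g (f t)) x (b * a).
Proof. intros; apply (derivable_pt_lim_comp f g); auto. Qed.
Lemma D_const c x : derivable_pt_lim (fun _ => c) x 0.
Proof. apply (derivable_pt_lim_const c). Qed.
Lemma D_id x : derivable_pt_lim (fun t => t) x 1.
Proof. apply derivable_pt_lim_id. Qed.
Lemma D_eq f x l l' : l = l' -> derivable_pt_lim f x l -> derivable_pt_lim f x l'.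
Proof. intros ->; auto. Qed.
Lemma D_ext f g x l : (forall t, f t = g t) -> derivable_pt_lim f x l -> derivable_pt_lim g x l.
Proof. intros H; replace g with f; auto; apply functional_extensionality; auto. Qed.
Lemma D_cont f x l : derivable_pt_lim f x l -> continuity_pt f x.
Proof. intros H; apply derivable_continuous_pt; exists l; exact H. Qed.
Lemma D_Rpower x p : 0 < x -> derivable_pt_lim (fun t => Rpower t p) x (p * Rpower x (p - 1)).
Proof. intros; apply derivable_pt_lim_power; auto. Qed.
Lemma D_exp x : derivable_pt_lim exp x (exp x).
Proof. apply derivable_pt_lim_exp. Qed.
Lemma D_scal f x l c : derivable_pt_lim f x l -> derivable_pt_lim (fun t => c * f t) x (c * l).
Proof. intros H; apply (D_eq _ _ (0 * f x + c * l)); [ring|]. apply (D_mult (fun _ => c) f); auto using D_const. Qed.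
Lemma D_pow x n : derivable_pt_lim (fun t => t ^ n) x (INR n * x ^ pred n).
Proof. apply derivable_pt_lim_pow. Qed.

Definition RI (f : R -> R) (a b : R) : R :=
  epsilon (inhabits 0) (fun l => exists pr : Riemann_integrable f a b, RiemannInt pr = l).

Lemma RI_eq f a b (pr : Riemann_integrable f a b) : RI f a b = RiemannInt pr.
Proof.
  unfold RI.
  destruct (epsilon_spec (inhabits 0) (fun l => exists pr : Riemann_integrable f a b, RiemannInt pr = l)
      (ex_intro _ (RiemannInt pr) (ex_intro _ pr eq_refl))) as [pr' H].
  rewrite <- H. apply RiemannInt_P5.
Qed.

Definition cont_on (f : R -> R) a b := forall x, a <= x <= b -> continuity_pt f x.

Lemma cont_int f a b : a <= b -> cont_on f a b -> Riemann_integrable f a b.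
Proof. intros; apply continuity_implies_RiemannInt; auto. Qed.

Lemma cont_on_sub f a b c d : cont_on f a b -> a <= c -> d <= b -> cont_on f c d.
Proof. intros H h1 h2 x hx; apply H; lra. Qed.

Lemma cont_on_plus f g a b : cont_on f a b -> cont_on g a b -> cont_on (fun t => f t + g t) a b.
Proof. intros H1 H2 x hx; apply (continuity_pt_plus f g); auto. Qed.
Lemma cont_on_minus f g a b : cont_on f a b -> cont_on g a b -> cont_on (fun t => f t - g t) a b.
Proof. intros H1 H2 x hx; apply (continuity_pt_minus f g); auto. Qed.
Lemma cont_on_mult f g a b : cont_on f a b -> cont_on g a b -> cont_on (fun t => f t * g t) a b.
Proof. intros H1 H2 x hx; apply (continuity_pt_mult f g); auto. Qed.
Lemma cont_on_const c a b : cont_on (fun _ => c) a b.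
Proof. intros x hx; apply (continuity_pt_const (fun _ => c)); intros ? ?; auto. Qed.
Lemma cont_on_scal c f a b : cont_on f a b -> cont_on (fun t => c * f t) a b.
Proof. intros; apply cont_on_mult; auto using cont_on_const. Qed.
Lemma cont_on_abs f a b : cont_on f a b -> cont_on (fun t => Rabs (f t)) a b.
Proof. intros H x hx. apply (continuity_pt_comp f Rabs); auto. apply Rcontinuity_abs. Qed.
Lemma cont_on_D f a b : (forall x, a <= x <= b -> exists l, derivable_pt_lim f x l) -> cont_on f a b.
Proof. intros H x hx; destruct (H x hx) as [l Hl]; eapply D_cont; eauto. Qed.

Lemma RI_lin f g a b l : a <= b -> cont_on f a b -> cont_on g a b ->
  RI (fun x => f x + l * g x) a b = RI f a b + l * RI g a b.
Proof.
  intros hab hf hg.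
  set (p1 := cont_int f a b hab hf). set (p2 := cont_int g a b hab hg).
  rewrite (RI_eq _ _ _ (RiemannInt_P10 l p1 p2)), (RI_eq _ _ _ p1), (RI_eq _ _ _ p2).
  apply RiemannInt_P13.
Qed.

Lemma RI_plus f g a b : a <= b -> cont_on f a b -> cont_on g a b ->
  RI (fun x => f x + g x) a b = RI f a b + RI g a b.
Proof.
  intros. rewrite <- (Rmult_1_l (RI g a b)), <- RI_lin; auto.
  f_equal; apply functional_extensionality; intros; ring.
Qed.

Lemma RI_minus f g a b : a <= b -> cont_on f a b -> cont_on g a b ->
  RI (fun x => f x - g x) a b = RI f a b - RI g a b.
Proof.
  intros. replace (RI f a b - RI g a b) with (RI f a b + (-1) * RI g a b) by ring.
  rewrite <- RI_lin; auto. f_equal; apply functional_extensionality; intros; ring.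
Qed.

Lemma RI_const c a b : RI (fun _ => c) a b = c * (b - a).
Proof. change (RI (fct_cte c) a b = c * (b - a)). rewrite (RI_eq _ _ _ (RiemannInt_P14 a b c)). apply RiemannInt_P15. Qed.

Lemma RI_scal f a b c : a <= b -> cont_on f a b -> RI (fun x => c * f x) a b = c * RI f a b.
Proof.
  intros. replace (fun x => c * f x) with (fun x => (fun _ => 0) x + c * f x).
  - rewrite RI_lin, RI_const; auto using cont_on_const; ring.
  - apply functional_extensionality; intros; ring.
Qed.

Lemma RI_le f g a b : a <= b -> cont_on f a b -> cont_on g a b ->
  (forall x, a < x < b -> f x <= g x) -> RI f a b <= RI g a b.
Proof.
  intros hab hf hg H.
  rewrite (RI_eq _ _ _ (cont_int f a b hab hf)), (RI_eq _ _ _ (cont_int g a b hab hg)).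
  apply RiemannInt_P19; auto.
Qed.

Lemma RI_pos f a b : a <= b -> cont_on f a b -> (forall x, a < x < b -> 0 <= f x) -> 0 <= RI f a b.
Proof.
  intros. replace 0 with (RI (fun _ => 0) a b) by (rewrite RI_const; ring).
  apply RI_le; auto using cont_on_const.
Qed.

Lemma RI_abs f a b : a <= b -> cont_on f a b -> Rabs (RI f a b) <= RI (fun x => Rabs (f x)) a b.
Proof.
  intros hab hf. set (p := cont_int f a b hab hf).
  rewrite (RI_eq _ _ _ p), (RI_eq _ _ _ (RiemannInt_P16 p)). apply RiemannInt_P17; auto.
Qed.

Lemma RI_ext f g a b : a <= b -> cont_on f a b -> (forall x, a <= x <= b -> f x = g x) ->
  RI f a b = RI g a b.
Proof.
  intros hab hf H. set (p := cont_int f a b hab hf).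
  assert (q : Riemann_integrable g a b).
  { apply (@Riemann_integrable_ext f g a b); [|exact p]. intros x hx; apply H.
    rewrite Rmin_left, Rmax_right in hx; auto. }
  rewrite (RI_eq _ _ _ p), (RI_eq _ _ _ q). apply RiemannInt_P18; auto. intros; apply H; lra.
Qed.

Lemma cont_on_ext f g a b : cont_on f a b -> (forall x, f x = g x) -> cont_on g a b.
Proof. intros H E. replace g with f; auto. apply functional_extensionality; auto. Qed.

Lemma RI_chasles f a b c : a <= b -> b <= c -> cont_on f a c ->
  RI f a b + RI f b c = RI f a c.
Proof.
  intros h1 h2 hf.
  rewrite (RI_eq _ _ _ (cont_int f a b h1 (cont_on_sub _ _ _ _ _ hf (Rle_refl _) h2))),
          (RI_eq _ _ _ (cont_int f b c h2 (cont_on_sub _ _ _ _ _ hf h1 (Rle_refl _)))),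
          (RI_eq _ _ _ (cont_int f a c (Rle_trans _ _ _ h1 h2) hf)).
  apply RiemannInt_P26.
Qed.

Lemma RI_FTC F f a b : a <= b -> cont_on f a b ->
  (forall x, a <= x <= b -> derivable_pt_lim F x (f x)) -> RI f a b = F b - F a.
Proof.
  intros hab hc hd.
  assert (A1 := RiemannInt_P29 hab hc).
  assert (A2 : antiderivative f F a b).
  { split; [|exact hab]. intros x hx.
    exists (exist (fun l => derivable_pt_abs F x l) (f x) (hd x hx)). reflexivity. }
  destruct (antiderivative_Ucte _ _ _ _ _ A1 A2) as [c Hc].
  rewrite (RI_eq _ _ _ (cont_int f a b hab hc)).
  rewrite (RiemannInt_P20 hab (FTC_P1 hab hc)).
  rewrite (Hc b), (Hc a); lra.
Qed.

Lemma RI_subst f phi phi' a b : a <= b -> phi a <= phi b ->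
  (forall t, a <= t <= b -> derivable_pt_lim phi t (phi' t)) ->
  (forall t, a <= t <= b -> phi a <= phi t <= phi b) ->
  cont_on f (phi a) (phi b) -> cont_on (fun t => f (phi t) * phi' t) a b ->
  RI (fun t => f (phi t) * phi' t) a b = RI f (phi a) (phi b).
Proof.
  intros hab hphi hd himg hf hg.
  set (P := primitive hphi (FTC_P1 hphi hf)).
  assert (HP : forall y, phi a <= y <= phi b -> derivable_pt_lim P y (f y)).
  { intros y hy. apply RiemannInt_P28; auto. }
  rewrite (RI_FTC P f); auto.
  apply (RI_FTC (fun t => P (phi t))); auto.
  intros t ht. apply (D_comp phi P t (phi' t) (f (phi t))); auto.
Qed.

Definition cont01 f := forall x, 0 < x < 1 -> continuity_pt f x.
Definition contpos f := forall x, 0 < x -> continuity_pt f x.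

Lemma cont01_on f a b : cont01 f -> 0 < a -> b < 1 -> cont_on f a b.
Proof. intros H ha hb x hx; apply H; lra. Qed.
Lemma contpos_on f a b : contpos f -> 0 < a -> cont_on f a b.
Proof. intros H ha x hx; apply H; lra. Qed.

Definition imp01 f l := forall e, 0 < e -> exists d, 0 < d <= 1/2 /\
  forall a b, 0 < a < d -> 1 - d < b < 1 -> Rabs (RI f a b - l) < e.
Definition impinf f l := forall e, 0 < e -> exists d M, 0 < d <= 1 /\ 1 <= M /\
  forall a b, 0 < a < d -> M < b -> Rabs (RI f a b - l) < e.

Lemma imp01_to f l : cont01 f -> imp01 f l -> improper_int_0_1 f l.
Proof.
  intros hc H e he. destruct (H e he) as [d [hd Hd]]. exists d. split; [lra|].
  intros a b ha hb.
  assert (hab : a <= b) by lra.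
  exists (cont_int f a b hab (cont01_on f a b hc ltac:(lra) ltac:(lra))).
  rewrite <- RI_eq. apply Hd; auto.
Qed.

Lemma impinf_to f l : contpos f -> impinf f l -> improper_int_0_inf f l.
Proof.
  intros hc H e he. destruct (H e he) as [d [M [hd [hM Hd]]]]. exists d, M. split; [lra|].
  intros a b ha hb.
  assert (hab : a <= b) by lra.
  exists (cont_int f a b hab (contpos_on f a b hc ltac:(lra))).
  rewrite <- RI_eq. apply Hd; auto.
Qed.

Lemma improper_inf_unique f l1 l2 : improper_int_0_inf f l1 -> improper_int_0_inf f l2 -> l1 = l2.
Proof.
  intros H1 H2. destruct (Req_dec l1 l2) as [E|E]; auto. exfalso.
  assert (hp : 0 < Rabs (l1 - l2) / 2) by (assert (l1 - l2 <> 0) by lra; pose proof (Rabs_pos_lt _ H); lra).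
  destruct (H1 _ hp) as [d1 [M1 [hd1 K1]]]. destruct (H2 _ hp) as [d2 [M2 [hd2 K2]]].
  set (a := Rmin d1 d2 / 2). set (b := Rmax M1 M2 + 1).
  assert (ha1 : 0 < a < d1) by (unfold a; pose proof (Rmin_l d1 d2); assert (0 < Rmin d1 d2) by (apply Rmin_glb_lt; lra); lra).
  assert (ha2 : 0 < a < d2) by (unfold a; pose proof (Rmin_r d1 d2); assert (0 < Rmin d1 d2) by (apply Rmin_glb_lt; lra); lra).
  assert (hb1 : M1 < b) by (unfold b; pose proof (Rmax_l M1 M2); lra).
  assert (hb2 : M2 < b) by (unfold b; pose proof (Rmax_r M1 M2); lra).
  destruct (K1 a b ha1 hb1) as [p1 Q1]. destruct (K2 a b ha2 hb2) as [p2 Q2].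
  rewrite (RiemannInt_P5 p1 p2) in Q1.
  pose proof (Rabs_triang (RiemannInt p2 - l2) (l1 - RiemannInt p2)).
  replace (RiemannInt p2 - l2 + (l1 - RiemannInt p2)) with (l1 - l2) in H by ring.
  rewrite Rabs_minus_sym in Q1. lra.
Qed.

Lemma imp01_unique f l1 l2 : imp01 f l1 -> imp01 f l2 -> l1 = l2.
Proof.
  intros H1 H2. destruct (Req_dec l1 l2) as [E|E]; auto. exfalso.
  assert (hp : 0 < Rabs (l1 - l2) / 2) by (assert (l1 - l2 <> 0) by lra; pose proof (Rabs_pos_lt _ H); lra).
  destruct (H1 _ hp) as [d1 [hd1 K1]]. destruct (H2 _ hp) as [d2 [hd2 K2]].
  set (d := Rmin d1 d2). assert (0 < d <= d1 /\ d <= d2) by (unfold d; pose proof (Rmin_l d1 d2); pose proof (Rmin_r d1 d2); assert (0 < Rmin d1 d2) by (apply Rmin_glb_lt; lra); lra).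
  specialize (K1 (d/2) (1 - d/2) ltac:(lra) ltac:(lra)). specialize (K2 (d/2) (1 - d/2) ltac:(lra) ltac:(lra)).
  pose proof (Rabs_triang (RI f (d/2) (1-d/2) - l2) (l1 - RI f (d/2) (1-d/2))).
  replace (RI f (d/2) (1-d/2) - l2 + (l1 - RI f (d/2) (1-d/2))) with (l1 - l2) in H0 by ring.
  rewrite Rabs_minus_sym in K1. lra.
Qed.

Lemma imp01_le f g l1 l2 : cont01 f -> cont01 g -> (forall x, 0 < x < 1 -> f x <= g x) ->
  imp01 f l1 -> imp01 g l2 -> l1 <= l2.
Proof.
  intros hf hg hle H1 H2. apply Rnot_lt_le; intro hlt.
  assert (hp : 0 < (l1 - l2) / 2) by lra.
  destruct (H1 _ hp) as [d1 [hd1 K1]]. destruct (H2 _ hp) as [d2 [hd2 K2]].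
  set (d := Rmin d1 d2). assert (0 < d <= d1 /\ d <= d2) by (unfold d; pose proof (Rmin_l d1 d2); pose proof (Rmin_r d1 d2); assert (0 < Rmin d1 d2) by (apply Rmin_glb_lt; lra); lra).
  specialize (K1 (d/2) (1 - d/2) ltac:(lra) ltac:(lra)). specialize (K2 (d/2) (1 - d/2) ltac:(lra) ltac:(lra)).
  assert (RI f (d/2) (1-d/2) <= RI g (d/2) (1-d/2)).
  { apply RI_le; try lra; try apply cont01_on; auto; try lra. intros; apply hle; lra. }
  apply Rabs_def2 in K1. apply Rabs_def2 in K2. lra.
Qed.

Lemma imp01_ext f g l : cont01 f -> (forall x, 0 < x < 1 -> f x = g x) -> imp01 f l -> imp01 g l.
Proof.
  intros hf E H e he. destruct (H e he) as [d [hd K]]. exists d; split; auto.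
  intros a b ha hb. rewrite <- (RI_ext f g a b); try lra; auto.
  apply cont01_on; auto; lra. intros; apply E; lra.
Qed.

Lemma imp01_lin f g l1 l2 c : cont01 f -> cont01 g -> imp01 f l1 -> imp01 g l2 ->
  imp01 (fun x => f x + c * g x) (l1 + c * l2).
Proof.
  intros hf hg H1 H2 e he.
  assert (he' : 0 < e / (2 * (Rabs c + 1))) by (apply Rdiv_lt_0_compat; [lra|pose proof (Rabs_pos c); lra]).
  destruct (H1 _ he') as [d1 [hd1 K1]]. destruct (H2 _ he') as [d2 [hd2 K2]].
  exists (Rmin d1 d2). split. { pose proof (Rmin_l d1 d2); assert (0 < Rmin d1 d2) by (apply Rmin_glb_lt; lra); lra. }
  intros a b ha hb. pose proof (Rmin_l d1 d2); pose proof (Rmin_r d1 d2).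
  rewrite RI_lin; try apply cont01_on; auto; try lra.
  specialize (K1 a b ltac:(lra) ltac:(lra)). specialize (K2 a b ltac:(lra) ltac:(lra)).
  replace (RI f a b + c * RI g a b - (l1 + c * l2)) with ((RI f a b - l1) + c * (RI g a b - l2)) by ring.
  eapply Rle_lt_trans; [apply Rabs_triang|]. rewrite Rabs_mult.
  assert (Rabs c * Rabs (RI g a b - l2) <= Rabs c * (e / (2 * (Rabs c + 1)))).
  { apply Rmult_le_compat_l; [apply Rabs_pos|lra]. }
  assert (Rabs c * (e / (2 * (Rabs c + 1))) < e / 2).
  { unfold Rdiv. rewrite Rinv_mult. pose proof (Rabs_pos c).
    assert (0 < / (Rabs c + 1)) by (apply Rinv_0_lt_compat; lra).
    assert (Rabs c * / (Rabs c + 1) < 1).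
    { apply (Rmult_lt_reg_r (Rabs c + 1)); [lra|]. rewrite Rmult_assoc, Rinv_l; lra. }
    replace (Rabs c * (e * (/ 2 * / (Rabs c + 1)))) with ((Rabs c * / (Rabs c + 1)) * (e/2)) by (unfold Rdiv; ring).
    apply Rlt_le_trans with (1 * (e/2)); [apply Rmult_lt_compat_r; lra|lra]. }
  assert (e / (2 * (Rabs c + 1)) <= e / 2).
  { apply Rmult_le_compat_l; [lra|]. apply Rinv_le_contravar; [lra|]. pose proof (Rabs_pos c); lra. }
  lra.
Qed.



Lemma RI_sub_interval f a b c d : c <= a -> a <= b -> b <= d -> cont_on f c d ->
  (forall x, c < x < d -> 0 <= f x) -> RI f a b <= RI f c d.
Proof.
  intros h1 h2 h3 hc hp.
  rewrite <- (RI_chasles f c a d), <- (RI_chasles f a b d); try lra; auto.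
  - assert (0 <= RI f c a) by (apply RI_pos; [lra| eapply cont_on_sub; [exact hc| |]; lra| intros; apply hp; lra]).
    assert (0 <= RI f b d) by (apply RI_pos; [lra| eapply cont_on_sub; [exact hc| |]; lra| intros; apply hp; lra]).
    lra.
  - eapply cont_on_sub; [exact hc| |]; lra.
Qed.

Lemma imp01_exists f B : cont01 f -> (forall x, 0 < x < 1 -> 0 <= f x) ->
  (forall a b, 0 < a <= b -> b < 1 -> RI f a b <= B) ->
  exists l, imp01 f l /\ forall a b, 0 < a <= b -> b < 1 -> RI f a b <= l.
Proof.
  intros hc hp hB.
  set (E := fun y => exists a, 0 < a <= 1/2 /\ y = RI f a (1 - a)).
  assert (bE : bound E). { exists B. intros y [a [ha ->]]. apply hB; lra. }
  assert (nE : exists y, E y). { exists (RI f (1/2) (1 - 1/2)). exists (1/2); split; auto; lra. }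
  destruct (completeness E bE nE) as [l [Hub Hlub]].
  assert (Hle : forall a b, 0 < a <= b -> b < 1 -> RI f a b <= l).
  { intros a b ha hb. set (c := Rmin a (1 - b)).
    assert (hc1 : c <= a) by apply Rmin_l. assert (hc2 : c <= 1 - b) by apply Rmin_r.
    assert (hc3 : 0 < c) by (apply Rmin_glb_lt; lra).
    apply Rle_trans with (RI f c (1 - c)).
    - apply RI_sub_interval; try lra. apply cont01_on; auto; lra. intros; apply hp; lra.
    - apply Hub. exists c; split; auto. split; auto.
      unfold c. destruct (Rle_dec a (1-b)); [rewrite Rmin_left|rewrite Rmin_right]; lra. }
  exists l; split; auto.
  intros e he.
  assert (exists y, E y /\ l - e < y).
  { apply NNPP; intro N. assert (l <= l - e); [|lra].
    apply Hlub. intros y Ey. apply Rnot_lt_le; intro. apply N; exists y; auto. }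
  destruct H as [y [[a0 [ha0 ->]] hy]].
  exists a0; split; auto. intros a b ha hb.
  assert (RI f a0 (1 - a0) <= RI f a b).
  { apply RI_sub_interval; try lra. apply cont01_on; auto; lra. intros; apply hp; lra. }
  assert (RI f a b <= l) by (apply Hle; lra).
  apply Rabs_def1; lra.
Qed.

Lemma inv_ge1 a : 0 < a <= 1 -> 1 <= / a.
Proof. intros. replace 1 with (/1) at 1 by apply Rinv_1. apply Rinv_le_contravar; lra. Qed.

Lemma impinf_exists f B : contpos f -> (forall x, 0 < x -> 0 <= f x) ->
  (forall a b, 0 < a <= b -> RI f a b <= B) ->
  exists l, impinf f l /\ forall a b, 0 < a <= b -> RI f a b <= l.
Proof.
  intros hc hp hB.
  set (E := fun y => exists a, 0 < a <= 1 /\ y = RI f a (/ a)).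
  assert (bE : bound E). { exists B. intros y [a [ha ->]]. apply hB. split; [lra|].
    pose proof (inv_ge1 a ha); lra. }
  assert (nE : exists y, E y). { exists (RI f 1 (/1)). exists 1; split; auto; lra. }
  destruct (completeness E bE nE) as [l [Hub Hlub]].
  assert (Hle : forall a b, 0 < a <= b -> RI f a b <= l).
  { intros a b ha. set (c := Rmin (Rmin a (/ b)) 1).
    assert (hb0 : 0 < / b) by (apply Rinv_0_lt_compat; lra).
    assert (hc1 : c <= a) by (unfold c; pose proof (Rmin_l (Rmin a (/b)) 1); pose proof (Rmin_l a (/b)); lra).
    assert (hc2 : c <= / b) by (unfold c; pose proof (Rmin_l (Rmin a (/b)) 1); pose proof (Rmin_r a (/b)); lra).
    assert (hc4 : c <= 1) by (unfold c; apply Rmin_r).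
    assert (hc3 : 0 < c) by (unfold c; apply Rmin_glb_lt; [apply Rmin_glb_lt|]; lra).
    assert (hbc : b <= / c).
    { rewrite <- (Rinv_inv b). apply Rinv_le_contravar; lra. }
    apply Rle_trans with (RI f c (/ c)).
    - apply RI_sub_interval; try lra. apply contpos_on; auto. intros; apply hp; lra.
    - apply Hub. exists c; split; auto. }
  exists l; split; auto.
  intros e he.
  assert (exists y, E y /\ l - e < y).
  { apply NNPP; intro N. assert (l <= l - e); [|lra].
    apply Hlub. intros y Ey. apply Rnot_lt_le; intro. apply N; exists y; auto. }
  destruct H as [y [[a0 [ha0 ->]] hy]].
  assert (h1 : 1 <= / a0) by (apply inv_ge1; lra).
  exists a0, (/ a0); split; auto. split; auto. intros a b ha hb.
  assert (RI f a0 (/ a0) <= RI f a b).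
  { apply RI_sub_interval; try lra. apply contpos_on; auto; lra. intros; apply hp; lra. }
  assert (RI f a b <= l) by (apply Hle; lra).
  apply Rabs_def1; lra.
Qed.

Lemma exp_le x y : x <= y -> exp x <= exp y.
Proof. intros [H|H]; [left; apply exp_increasing; auto| subst; lra]. Qed.
Lemma ln_le x y : 0 < x -> x <= y -> ln x <= ln y.
Proof. intros h [H|H]; [left; apply ln_increasing; auto| subst; lra]. Qed.
Lemma Rpower_pos x y : 0 < Rpower x y.
Proof. unfold Rpower; apply exp_pos. Qed.
Lemma Rpower_le1 t y : 0 < t <= 1 -> 0 <= y -> Rpower t y <= 1.
Proof.
  intros ht hy. unfold Rpower. rewrite <- exp_0. apply exp_le.
  assert (ln t <= 0) by (rewrite <- ln_1; apply ln_le; lra). nra.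
Qed.
Lemma Rpower_ge1 t y : 1 <= t -> 0 <= y -> 1 <= Rpower t y.
Proof.
  intros ht hy. unfold Rpower. rewrite <- exp_0. apply exp_le.
  assert (0 <= ln t) by (rewrite <- ln_1; apply ln_le; lra). nra.
Qed.
Lemma Rpower_exp t y : Rpower (exp t) y = exp (y * t).
Proof. unfold Rpower; rewrite ln_exp; auto. Qed.
Lemma Rpower_nat t n : 0 < t -> Rpower t (INR n) = t ^ n.
Proof. intros; apply Rpower_pow; auto. Qed.
Lemma Rpower_plus' x y z : Rpower z (x + y) = Rpower z x * Rpower z y.
Proof. apply Rpower_plus. Qed.
Lemma Rpower_1' x : 0 < x -> Rpower x 1 = x.
Proof. apply Rpower_1. Qed.
Lemma Rpower_0 x : 0 < x -> Rpower x 0 = 1.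
Proof. apply Rpower_O. Qed.
Lemma Rpower_sq t y : 0 < t -> Rpower (t ^ 2) y = Rpower t (2 * y).
Proof.
  intros. rewrite <- (Rpower_nat t 2) by auto. rewrite Rpower_mult. f_equal; try (simpl; ring).
Qed.
Lemma Rpower_mul x y z : 0 < x -> 0 < y -> Rpower (x * y) z = Rpower x z * Rpower y z.
Proof. intros; rewrite Rpower_mult_distr; auto. Qed.
Lemma Rpower_one y : Rpower 1 y = 1.
Proof. unfold Rpower; rewrite ln_1, Rmult_0_r, exp_0; auto. Qed.

Lemma Rpower_bound s e : /2 <= s <= 2 -> Rpower s e <= Rpower 2 (Rabs e).
Proof.
  intros hs. unfold Rpower. apply exp_le.
  assert (l2 : 0 < ln 2) by (rewrite <- ln_1; apply ln_increasing; lra).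
  assert (ln s <= ln 2) by (apply ln_le; lra).
  assert (- ln 2 <= ln s).
  { rewrite <- ln_Rinv by lra. apply ln_le; [apply Rinv_0_lt_compat; lra|lra]. }
  assert (Rabs (ln s) <= ln 2) by (apply Rabs_le; lra).
  apply Rle_trans with (Rabs (e * ln s)); [apply Rle_abs|]. rewrite Rabs_mult.
  apply Rmult_le_compat_l; auto. apply Rabs_pos.
Qed.

Lemma Rpower_small x e : 0 < x -> 0 < e -> exists d, 0 < d /\ forall t, 0 < t < d -> Rpower t x < e.
Proof.
  intros hx he. exists (exp (ln e / x)). split; [apply exp_pos|].
  intros t ht. unfold Rpower. rewrite <- (exp_ln e) by auto. apply exp_increasing.
  assert (ln t < ln e / x).
  { rewrite <- (ln_exp (ln e / x)). apply ln_increasing; lra. }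
  apply (Rmult_lt_compat_l x) in H; auto.
  replace (x * (ln e / x)) with (ln e) in H by (field; lra). lra.
Qed.

Lemma D_Rpower_comp f x l p : 0 < f x -> derivable_pt_lim f x l ->
  derivable_pt_lim (fun t => Rpower (f t) p) x (p * Rpower (f x) (p - 1) * l).
Proof.
  intros h H. apply (D_comp f (fun u => Rpower u p)); auto. apply D_Rpower; auto.
Qed.

Lemma cont_pt_ext f g x : (forall t, f t = g t) -> continuity_pt f x -> continuity_pt g x.
Proof. intros E H. replace g with f; auto. apply functional_extensionality; auto. Qed.

Lemma cont_Rpower p x : 0 < x -> continuity_pt (fun t => Rpower t p) x.
Proof. intros; eapply D_cont; apply D_Rpower; auto. Qed.
Lemma cont_Rpower1m p x : x < 1 -> continuity_pt (fun t => Rpower (1 - t) p) x.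
Proof.
  intros; eapply D_cont. apply D_Rpower_comp; [lra|]. apply D_minus; [apply D_const|apply D_id].
Qed.
Lemma cont_exp_lin c x : continuity_pt (fun t => exp (c * t)) x.
Proof. eapply D_cont. apply (D_comp (fun t => c * t) exp). apply D_scal, D_id. apply D_exp. Qed.

Definition gfun x := fun t => Rpower t (x - 1) * exp (- t).

Lemma gfun_cont x : contpos (gfun x).
Proof.
  intros t ht. unfold gfun. apply (continuity_pt_mult (fun t => Rpower t (x-1)) (fun t => exp (- t))).
  apply cont_Rpower; auto.
  apply (cont_pt_ext (fun t => exp (-1 * t))). intros; f_equal; ring. apply cont_exp_lin.
Qed.

Lemma gfun_pos x t : 0 <= gfun x t.
Proof. unfold gfun. apply Rmult_le_pos; left; [apply Rpower_pos|apply exp_pos]. Qed.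

Lemma pow_exp_bound (N : nat) t : (0 < N)%nat -> 0 <= t -> t ^ N <= INR N ^ N * exp t.
Proof.
  intros hN ht. assert (hN' : 0 < INR N) by (apply lt_0_INR; lia).
  replace (exp t) with (exp (t / INR N) ^ N).
  2:{ rewrite <- Rpower_nat by apply exp_pos. rewrite Rpower_exp. f_equal. field. lra. }
  rewrite <- Rpow_mult_distr.
  apply pow_incr. split; auto.
  pose proof (exp_ineq1_le (t / INR N)).
  replace t with (INR N * (t / INR N)) at 1 by (field; lra).
  apply Rmult_le_compat_l; [lra|]. unfold Rdiv in *. nra.
Qed.

Lemma gfun_tail_bound x : exists K, 0 <= K /\ forall t, 1 <= t -> gfun x t <= K / t ^ 2.
Proof.
  destruct (archimed (Rabs x + 1)) as [hup _].
  set (N := Z.to_nat (up (Rabs x + 1))).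
  assert (hN : INR N = IZR (up (Rabs x + 1))).
  { unfold N. rewrite INR_IZR_INZ. rewrite Z2Nat.id; auto. apply le_IZR. pose proof (Rabs_pos x). lra. }
  assert (hN1 : x + 1 <= INR N) by (rewrite hN; pose proof (Rle_abs x); lra).
  assert (hN0 : (0 < N)%nat) by (apply INR_lt; simpl; pose proof (Rabs_pos x); lra).
  exists (INR N ^ N). split; [apply pow_le; apply pos_INR|].
  intros t ht. unfold gfun.
  assert (t2 : 0 < t ^ 2) by (apply pow_lt; lra).
  apply (Rmult_le_reg_r (t ^ 2)); auto.
  replace (INR N ^ N / t ^ 2 * t ^ 2) with (INR N ^ N) by (field; lra).
  replace (Rpower t (x - 1) * exp (- t) * t ^ 2) with (Rpower t (x + 1) * exp (- t)).
  2:{ rewrite <- (Rpower_nat t 2) by lra. replace (x + 1) with ((x - 1) + INR 2) by (simpl; ring).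
      rewrite Rpower_plus. ring. }
  apply Rle_trans with (t ^ N * exp (- t)).
  - apply Rmult_le_compat_r; [left; apply exp_pos|].
    rewrite <- Rpower_nat by lra. apply Rle_Rpower; auto.
  - pose proof (pow_exp_bound N t hN0 ltac:(lra)).
    apply Rle_trans with (INR N ^ N * exp t * exp (-t)).
    apply Rmult_le_compat_r; [left; apply exp_pos|auto].
    rewrite Rmult_assoc, <- exp_plus, Rplus_opp_r, exp_0. lra.
Qed.

Lemma RI_Rpower_01 x c : 0 < x -> 0 < c <= 1 -> RI (fun t => Rpower t (x - 1)) c 1 <= / x.
Proof.
  intros hx hc.
  rewrite (RI_FTC (fun t => Rpower t x / x)); try lra.
  - rewrite Rpower_one. assert (0 < Rpower c x / x) by (apply Rdiv_lt_0_compat; auto; apply Rpower_pos).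
    unfold Rdiv in *. lra.
  - intros t ht; apply cont_Rpower; lra.
  - intros t ht. apply (D_eq _ _ (x * Rpower t (x - 1) / x)); [field; lra|].
    apply derivable_pt_lim_div_scal. apply D_Rpower; lra.
Qed.

Lemma Rpower_neg_nat t n : 0 < t -> Rpower t (- INR n) = / t ^ n.
Proof. intros; rewrite Rpower_Ropp, Rpower_nat; auto. Qed.

Lemma RI_inv_sq K d : 1 <= d -> 0 <= K -> RI (fun t => K * Rpower t (-2)) 1 d <= K.
Proof.
  intros hd hK.
  rewrite (RI_FTC (fun t => - K * Rpower t (-1))); try lra.
  - rewrite Rpower_one. assert (0 < Rpower d (-1)) by apply Rpower_pos.
    assert (Rpower d (-1) <= 1).
    { replace (-1) with (- INR 1) by (simpl; ring). rewrite Rpower_neg_nat by lra.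
      simpl. rewrite Rmult_1_r. rewrite <- Rinv_1 at 1. apply Rinv_le_contravar; lra. }
    nra.
  - intros t ht. apply (continuity_pt_mult (fun _ => K) (fun t => Rpower t (-2))).
    apply continuity_pt_const; intros ? ?; auto. apply cont_Rpower; lra.
  - intros t ht. apply (D_eq _ _ (- K * (-1 * Rpower t (-1 - 1)))).
    { replace (-1 - 1) with (-2) by ring. ring. }
    apply D_scal. apply D_Rpower; lra.
Qed.

Lemma gfun_bound x : 0 < x -> exists B, forall a b, 0 < a <= b -> RI (gfun x) a b <= B.
Proof.
  intros hx. destruct (gfun_tail_bound x) as [K [hK HK]].
  exists (/ x + K). intros a b hab.
  set (c := Rmin a 1). set (d := Rmax b 1).
  assert (hc : 0 < c <= 1) by (unfold c; split; [apply Rmin_glb_lt; lra| apply Rmin_r]).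
  assert (hca : c <= a) by apply Rmin_l. assert (hd : 1 <= d) by apply Rmax_r. assert (hbd : b <= d) by apply Rmax_l.
  apply Rle_trans with (RI (gfun x) c d).
  { apply RI_sub_interval; try lra. apply contpos_on; [apply gfun_cont|lra]. intros; apply gfun_pos. }
  rewrite <- (RI_chasles _ c 1 d); try lra. 2:{ apply contpos_on; [apply gfun_cont|lra]. }
  apply Rplus_le_compat.
  - apply Rle_trans with (RI (fun t => Rpower t (x - 1)) c 1); [|apply RI_Rpower_01; lra].
    apply RI_le; try lra. apply contpos_on; [apply gfun_cont|lra]. intros t ht; apply cont_Rpower; lra.
    intros t ht. unfold gfun. rewrite <- Rmult_1_r. apply Rmult_le_compat_l; [left; apply Rpower_pos|].
    rewrite <- exp_0. apply exp_le. lra.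
  - apply Rle_trans with (RI (fun t => K * Rpower t (-2)) 1 d); [|apply RI_inv_sq; lra].
    apply RI_le; try lra. apply contpos_on; [apply gfun_cont|lra].
    intros t ht. apply (continuity_pt_mult (fun _ => K) (fun t => Rpower t (-2))).
    apply continuity_pt_const; intros ? ?; auto. apply cont_Rpower; lra.
    intros t ht. replace (-2) with (- INR 2) by (simpl; ring). rewrite Rpower_neg_nat by lra.
    apply HK; lra.
Qed.

Lemma Gamma_spec x : 0 < x -> impinf (gfun x) (Gamma x) /\ forall a b, 0 < a <= b -> RI (gfun x) a b <= Gamma x.
Proof.
  intros hx. destruct (gfun_bound x hx) as [B HB].
  destruct (impinf_exists (gfun x) B (gfun_cont x) (fun t _ => gfun_pos x t) HB) as [l [Hl Hle]].
  assert (E : Gamma x = l).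
  { unfold Gamma.
    apply (improper_inf_unique (gfun x)).
    - apply (epsilon_spec (inhabits 0) (fun l => improper_int_0_inf (gfun x) l)).
      exists l. apply impinf_to; auto. apply gfun_cont.
    - apply impinf_to; auto. apply gfun_cont. }
  rewrite E; auto.
Qed.

Lemma Gamma_pos x : 0 < x -> 0 < Gamma x.
Proof.
  intros hx. destruct (Gamma_spec x hx) as [_ H].
  apply Rlt_le_trans with (RI (gfun x) 1 2); [|apply H; lra].
  set (c := exp (- (Rabs (x - 1) * ln 2)) * exp (-2)).
  apply Rlt_le_trans with (RI (fun _ => c) 1 2).
  - rewrite RI_const. unfold c. assert (0 < exp (- (Rabs (x - 1) * ln 2)) * exp (-2)) by (apply Rmult_lt_0_compat; apply exp_pos). lra.
  - apply RI_le; try lra. apply cont_on_const. apply contpos_on; [apply gfun_cont|lra].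
    intros t ht. unfold c, gfun. apply Rmult_le_compat; try (left; apply exp_pos).
    + unfold Rpower. apply exp_le.
      assert (0 <= ln t) by (rewrite <- ln_1; apply ln_le; lra).
      assert (ln t <= ln 2) by (apply ln_le; lra).
      assert (Rabs ((x - 1) * ln t) <= Rabs (x - 1) * ln 2).
      { rewrite Rabs_mult, (Rabs_pos_eq (ln t)) by lra. apply Rmult_le_compat_l; auto; apply Rabs_pos. }
      pose proof (Rle_abs (- ((x - 1) * ln t))) as Hq. rewrite Rabs_Ropp in Hq. lra.
    + apply exp_le; lra.
Qed.

Lemma cont_pt_eps f x0 : continuity_pt f x0 -> forall e, 0 < e ->
  exists d, 0 < d /\ forall t, Rabs (t - x0) < d -> Rabs (f t - f x0) < e.
Proof.
  intros H e he. destruct (H e he) as [d [hd Hd]]. exists d; split; auto.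
  intros t ht. destruct (Req_dec t x0) as [->|ne].
  - rewrite Rminus_diag, Rabs_R0; auto.
  - apply (Hd t). split; [split; [exact I| auto]|exact ht].
Qed.

Definition bfun p q := fun t => Rpower t (p - 1) * Rpower (1 - t) (q - 1).

Lemma bfun_cont p q : cont01 (bfun p q).
Proof.
  intros t ht. unfold bfun. apply (continuity_pt_mult (fun t => Rpower t (p - 1)) (fun t => Rpower (1 - t) (q - 1))).
  apply cont_Rpower; lra. apply cont_Rpower1m; lra.
Qed.

Lemma bfun_on p q a b : 0 < a -> b < 1 -> cont_on (bfun p q) a b.
Proof. intros; apply cont01_on; auto; apply bfun_cont. Qed.

Lemma bfun_pos p q t : 0 <= bfun p q t.
Proof. unfold bfun; apply Rmult_le_pos; left; apply Rpower_pos. Qed.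

Lemma RI_Rpower_1m q a b : 0 < q -> 0 < a <= b -> b < 1 -> RI (fun t => Rpower (1 - t) (q - 1)) a b <= / q.
Proof.
  intros hq hab hb.
  rewrite (RI_FTC (fun t => - Rpower (1 - t) q / q)); try lra.
  - assert (0 < Rpower (1 - b) q / q) by (apply Rdiv_lt_0_compat; auto; apply Rpower_pos).
    assert (Rpower (1 - a) q <= 1) by (apply Rpower_le1; lra).
    assert (Rpower (1 - a) q / q <= / q) by (unfold Rdiv; rewrite <- (Rmult_1_l (/ q)) at 2;
      apply Rmult_le_compat_r; [left; apply Rinv_0_lt_compat|]; lra).
    unfold Rdiv in *. lra.
  - intros t ht; apply cont_Rpower1m; lra.
  - intros t ht. apply (D_eq _ _ (- (q * Rpower (1 - t) (q - 1) * (0 - 1)) / q)); [field; lra|].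
    apply derivable_pt_lim_div_scal. apply derivable_pt_lim_opp.
    apply D_Rpower_comp; [lra|]. apply D_minus; [apply D_const|apply D_id].
Qed.

Lemma bfun_bound p q : 0 < p -> 0 < q -> forall a b, 0 < a <= b -> b < 1 ->
  RI (bfun p q) a b <= Rpower 2 (Rabs (q - 1)) * / p + Rpower 2 (Rabs (p - 1)) * / q.
Proof.
  intros hp hq a b hab hb.
  assert (c1 : cont_on (fun t => Rpower t (p - 1)) a b) by (intros t ht; apply cont_Rpower; lra).
  assert (c2 : cont_on (fun t => Rpower (1 - t) (q - 1)) a b) by (intros t ht; apply cont_Rpower1m; lra).
  apply Rle_trans with (RI (fun t => Rpower 2 (Rabs (q - 1)) * Rpower t (p - 1) + Rpower 2 (Rabs (p - 1)) * Rpower (1 - t) (q - 1)) a b).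
  - apply RI_le; try lra. apply bfun_on; lra.
    apply cont_on_plus; apply cont_on_scal; auto.
    intros t ht. unfold bfun.
    assert (0 < Rpower t (p - 1)) by apply Rpower_pos. assert (0 < Rpower (1 - t) (q - 1)) by apply Rpower_pos.
    destruct (Rle_dec t (1/2)).
    + assert (Rpower (1 - t) (q - 1) <= Rpower 2 (Rabs (q - 1))) by (apply Rpower_bound; lra).
      assert (0 < Rpower 2 (Rabs (p - 1))) by apply Rpower_pos. nra.
    + assert (Rpower t (p - 1) <= Rpower 2 (Rabs (p - 1))) by (apply Rpower_bound; lra).
      assert (0 < Rpower 2 (Rabs (q - 1))) by apply Rpower_pos. nra.
  - rewrite RI_plus, !RI_scal; try lra; try apply cont_on_scal; auto.
    apply Rplus_le_compat; apply Rmult_le_compat_l; try (left; apply Rpower_pos).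
    + apply Rle_trans with (RI (fun t => Rpower t (p - 1)) a 1); [|apply RI_Rpower_01; lra].
      apply RI_sub_interval; try lra. intros t ht; apply cont_Rpower; lra. intros; left; apply Rpower_pos.
    + apply RI_Rpower_1m; lra.
Qed.

Definition Bt p q := epsilon (inhabits 0) (fun l => imp01 (bfun p q) l).

Lemma Bt_spec p q : 0 < p -> 0 < q -> imp01 (bfun p q) (Bt p q) /\
  forall a b, 0 < a <= b -> b < 1 -> RI (bfun p q) a b <= Bt p q.
Proof.
  intros hp hq.
  destruct (imp01_exists (bfun p q) _ (bfun_cont p q) (fun t _ => bfun_pos p q t) (bfun_bound p q hp hq)) as [l [Hl Hle]].
  assert (E : Bt p q = l).
  { apply (imp01_unique (bfun p q)); auto.
    apply (epsilon_spec (inhabits 0) (fun l => imp01 (bfun p q) l)). exists l; auto. }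
  rewrite E; auto.
Qed.

Lemma Bt_val p q l : 0 < p -> 0 < q -> imp01 (bfun p q) l -> Bt p q = l.
Proof. intros hp hq H. apply (imp01_unique (bfun p q)); auto. apply Bt_spec; auto. Qed.



Lemma Rpower_near1 p e : 0 < e -> exists d, 0 < d <= 1/2 /\ forall t, 1 - d < t < 1 -> Rabs (Rpower t p - 1) < e.
Proof.
  intros he. destruct (cont_pt_eps _ 1 (cont_Rpower p 1 ltac:(lra)) e he) as [d [hd H]].
  exists (Rmin d (1/2)). split. split; [apply Rmin_glb_lt; lra| apply Rmin_r].
  intros t ht. rewrite <- (Rpower_one p). apply H. pose proof (Rmin_l d (1/2)). apply Rabs_def1; lra.
Qed.

Lemma Bt_1 p : 0 < p -> Bt p 1 = / p.
Proof.
  intros hp. apply Bt_val; try lra.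
  intros e he.
  assert (he' : 0 < e * p / 2) by (apply Rdiv_lt_0_compat; [nra|lra]).
  destruct (Rpower_small p _ hp he') as [d1 [hd1 H1]].
  destruct (Rpower_near1 p _ he') as [d2 [hd2 H2]].
  exists (Rmin d1 d2). split. split; [apply Rmin_glb_lt; lra| pose proof (Rmin_r d1 d2); lra].
  intros a b ha hb. pose proof (Rmin_l d1 d2). pose proof (Rmin_r d1 d2).
  rewrite (RI_FTC (fun t => Rpower t p / p)); try lra.
  - specialize (H1 a ltac:(lra)). specialize (H2 b ltac:(lra)).
    assert (0 < Rpower a p) by apply Rpower_pos.
    replace (Rpower b p / p - Rpower a p / p - / p) with ((Rpower b p - 1) / p - Rpower a p / p) by (field; lra).
    apply Rle_lt_trans with (Rabs ((Rpower b p - 1) / p) + Rabs (Rpower a p / p)).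
    { unfold Rminus at 1. rewrite <- (Rabs_Ropp (Rpower a p / p)). apply Rabs_triang. }
    unfold Rdiv. rewrite !Rabs_mult, Rabs_inv, (Rabs_pos_eq p) by lra. rewrite (Rabs_pos_eq (Rpower a p)) by lra.
    apply (Rmult_lt_reg_r p); auto. rewrite Rmult_plus_distr_r, !Rmult_assoc, Rinv_l by lra.
    replace (e * p / 2) with (e * p * /2) in * by reflexivity. lra.
  - apply cont01_on; [apply bfun_cont|lra|lra].
  - intros t ht. unfold bfun. replace (1 - 1) with 0 by ring. rewrite Rpower_0 by lra.
    apply (D_eq _ _ (p * Rpower t (p - 1) / p)); [field; lra|].
    apply derivable_pt_lim_div_scal. apply D_Rpower; lra.
Qed.

Lemma Rpower_split1 t p : 0 < t -> Rpower t p = t * Rpower t (p - 1).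
Proof. intros. rewrite <- (Rpower_1 t) at 2 by auto. rewrite <- Rpower_plus. f_equal; ring. Qed.

Lemma Bt_rec p q : 0 < p -> 0 < q -> Bt p (q + 1) = q / (p + q) * Bt p q.
Proof.
  intros hp hq.
  set (c := - (q / (p + q))).
  assert (H1 := proj1 (Bt_spec p (q + 1) hp ltac:(lra))).
  assert (H2 := proj1 (Bt_spec p q hp hq)).
  assert (H3 := imp01_lin _ _ _ _ c (bfun_cont p (q + 1)) (bfun_cont p q) H1 H2).
  assert (H4 : imp01 (fun x => bfun p (q + 1) x + c * bfun p q x) 0).
  { intros e he.
    assert (he' : 0 < e * (p + q) / 2) by (apply Rdiv_lt_0_compat; [nra|lra]).
    destruct (Rpower_small p _ hp he') as [d1 [hd1 K1]].
    destruct (Rpower_small q _ hq he') as [d2 [hd2 K2]].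
    exists (Rmin (Rmin d1 d2) (1/2)). split. split; [apply Rmin_glb_lt; [apply Rmin_glb_lt|]; lra| apply Rmin_r].
    intros a b ha hb. pose proof (Rmin_l (Rmin d1 d2) (1/2)). pose proof (Rmin_r (Rmin d1 d2) (1/2)). pose proof (Rmin_l d1 d2). pose proof (Rmin_r d1 d2).
    rewrite (RI_FTC (fun t => Rpower t p * Rpower (1 - t) q / (p + q))); try lra.
    - specialize (K1 a ltac:(lra)). specialize (K2 (1 - b) ltac:(lra)).
      assert (Rpower (1 - a) q <= 1) by (apply Rpower_le1; lra).
      assert (Rpower b p <= 1) by (apply Rpower_le1; lra).
      assert (0 < Rpower a p) by apply Rpower_pos. assert (0 < Rpower (1 - a) q) by apply Rpower_pos.
      assert (0 < Rpower b p) by apply Rpower_pos. assert (0 < Rpower (1 - b) q) by apply Rpower_pos.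
      assert (Rpower a p * Rpower (1 - a) q <= Rpower a p) by nra.
      assert (Rpower b p * Rpower (1 - b) q <= Rpower (1 - b) q) by nra.
      assert (0 < Rpower a p * Rpower (1 - a) q) by nra.
      assert (0 < Rpower b p * Rpower (1 - b) q) by nra.
      rewrite Rminus_0_r.
      replace (Rpower b p * Rpower (1 - b) q / (p + q) - Rpower a p * Rpower (1 - a) q / (p + q))
        with ((Rpower b p * Rpower (1 - b) q - Rpower a p * Rpower (1 - a) q) / (p + q)) by (field; lra).
      unfold Rdiv. rewrite Rabs_mult, Rabs_inv, (Rabs_pos_eq (p + q)) by lra.
      apply (Rmult_lt_reg_r (p + q)); [lra|]. rewrite Rmult_assoc, Rinv_l, Rmult_1_r by lra.
      replace (e * (p + q) / 2) with (e * (p + q) * / 2) in * by reflexivity.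
      apply Rabs_def1; lra.
    - apply cont_on_plus; [apply bfun_on; lra| apply cont_on_scal; apply bfun_on; lra].
    - intros t ht.
      apply (D_eq _ _ ((p * Rpower t (p - 1) * Rpower (1 - t) q + Rpower t p * (q * Rpower (1 - t) (q - 1) * (0 - 1))) / (p + q))).
      + unfold bfun, c. rewrite (Rpower_split1 t p), (Rpower_split1 (1 - t) q) by lra.
        replace (q + 1 - 1) with (q - 1 + 1) by ring. rewrite Rpower_plus, Rpower_1 by lra.
        field. lra.
      + apply derivable_pt_lim_div_scal. apply (D_mult (fun t => Rpower t p) (fun t => Rpower (1 - t) q)). apply D_Rpower; lra.
        apply D_Rpower_comp; [lra|]. apply D_minus; [apply D_const|apply D_id]. }
  pose proof (imp01_unique _ _ _ H3 H4). unfold c in H. lra.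
Qed.

Lemma Bt_anti p q1 q2 : 0 < p -> 0 < q1 -> q1 <= q2 -> Bt p q2 <= Bt p q1.
Proof.
  intros hp hq h. apply (imp01_le (bfun p q2) (bfun p q1)); try apply bfun_cont; try apply Bt_spec; try lra.
  intros t ht. unfold bfun. apply Rmult_le_compat_l; [left; apply Rpower_pos|].
  unfold Rpower. apply exp_le. assert (ln (1 - t) < 0) by (rewrite <- ln_1; apply ln_increasing; lra). nra.
Qed.

Lemma Bt_pos p q : 0 < p -> 0 < q -> 0 <= Bt p q.
Proof.
  intros hp hq. apply (imp01_le (fun _ => 0) (bfun p q)); try apply bfun_cont; try apply Bt_spec; auto.
  intros x hx. apply (continuity_pt_const (fun _ => 0)); intros ? ?; auto.
  intros; apply bfun_pos.
  intros e he. exists (1/2); split; [lra|]. intros; rewrite RI_const, Rmult_0_l, Rminus_0_r, Rabs_R0; auto.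
Qed.

Fixpoint poch' (a : R) (k : nat) : R := match k with O => 1 | S k' => poch' a k' * (a + INR k') end.

Lemma Bt_nat x n : 0 < x -> Bt x (INR n + 1) = INR (fact n) / poch x (S n).
Proof.
  intros hx. induction n.
  - simpl. replace (0 + 1) with 1 by ring. rewrite Bt_1 by auto. field. lra.
  - rewrite S_INR, Bt_rec, IHn by (try apply pos_INR; pose proof (pos_INR n); lra).
    change (poch x (S (S n))) with (poch x (S n) * (x + INR (S n))).
    rewrite fact_simpl, mult_INR, S_INR.
    assert (0 < poch x (S n)).
    { clear IHn. induction (S n); simpl; [lra|]. pose proof (pos_INR n0). nra. }
    pose proof (pos_INR n). field. split; lra.
Qed.

Lemma le_eps X C : (forall e, 0 < e -> X <= C + e) -> X <= C.
Proof. intros H. apply Rnot_lt_le; intro h. specialize (H ((X - C)/2) ltac:(lra)). lra. Qed.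



Lemma nat_big (r : R) : exists N : nat, r < INR N.
Proof.
  destruct (archimed (Rabs r)) as [h _]. exists (Z.to_nat (up (Rabs r))).
  assert (0 <= up (Rabs r))%Z by (apply le_IZR; pose proof (Rabs_pos r); lra).
  rewrite INR_IZR_INZ, Z2Nat.id; auto. pose proof (Rle_abs r); lra.
Qed.

Lemma cv_bound u l C : (forall n, (1 <= n)%nat -> Rabs (u n - l) <= C / INR n) -> Un_cv u l.
Proof.
  intros H e he. destruct (nat_big (Rabs C / e)) as [N hN].
  exists (S N). intros n hn. unfold R_dist.
  assert (hn1 : (1 <= n)%nat) by lia.
  assert (hpos : 0 < INR n) by (apply lt_0_INR; lia).
  assert (INR N < INR n) by (apply lt_INR; lia).
  eapply Rle_lt_trans; [apply H; auto|].
  apply (Rmult_lt_reg_r (INR n)); auto. unfold Rdiv. rewrite Rmult_assoc, Rinv_l, Rmult_1_r by lra.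
  apply Rle_lt_trans with (Rabs C); [apply Rle_abs|].
  apply (Rmult_lt_reg_r (/ e)); [apply Rinv_0_lt_compat; auto|]. rewrite (Rmult_comm e), Rmult_assoc, Rinv_r, Rmult_1_r by lra.
  unfold Rdiv in hN. lra.
Qed.

Lemma cv_inv u l : Un_cv u l -> l <> 0 -> Un_cv (fun n => / u n) (/ l).
Proof.
  intros H hl. apply (continuity_seq Rinv u l); auto.
  apply (continuity_pt_inv (fun x => x)); auto. apply derivable_continuous_pt, derivable_pt_id.
Qed.

Lemma cv_shift u l K : Un_cv u l -> Un_cv (fun n => u (n + K)%nat) l.
Proof. intros H e he. destruct (H e he) as [N HN]. exists N. intros n hn. apply HN. lia. Qed.

Lemma cv_squeeze u v w l : (forall n, u n <= v n <= w n) -> Un_cv u l -> Un_cv w l -> Un_cv v l.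
Proof.
  intros H Hu Hw e he. destruct (Hu e he) as [N1 H1]. destruct (Hw e he) as [N2 H2].
  exists (max N1 N2). intros n hn. specialize (H1 n ltac:(lia)). specialize (H2 n ltac:(lia)).
  unfold R_dist in *. specialize (H n). apply Rabs_def2 in H1. apply Rabs_def2 in H2. apply Rabs_def1; lra.
Qed.

Lemma cv_ext u v l : (forall n, u n = v n) -> Un_cv u l -> Un_cv v l.
Proof. intros E H e he. destruct (H e he) as [N HN]. exists N. intros n hn. rewrite <- E. auto. Qed.

Lemma cv_const c l : Un_cv (fun _ => c) l -> c = l.
Proof.
  intros H. apply (UL_sequence (fun _ => c)); auto. intros e he. exists O. intros; unfold R_dist.
  rewrite Rminus_diag, Rabs_R0; auto.
Qed.

Lemma cv_mult u v a b : Un_cv u a -> Un_cv v b -> Un_cv (fun n => u n * v n) (a * b).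
Proof. intros; apply CV_mult; auto. Qed.

Lemma bernoulli y n : -1 <= y -> 1 + INR n * y <= (1 + y) ^ n.
Proof.
  intros hy. induction n.
  - simpl; lra.
  - rewrite S_INR. simpl. pose proof (pos_INR n).
    assert (0 <= INR n * y * y) by (rewrite Rmult_assoc; apply Rmult_le_pos; [lra|nra]).
    nra.
Qed.

Lemma exp_pow_nat y n : exp y ^ n = exp (INR n * y).
Proof. rewrite <- Rpower_nat by apply exp_pos. apply Rpower_exp. Qed.

Lemma lag_pt n t : (1 <= n)%nat -> 0 < t < INR n ->
  0 <= exp (- t) - (1 - t / INR n) ^ n <= t ^ 2 * exp (- t) / INR n.
Proof.
  intros hn ht. assert (hN : 1 <= INR n) by (apply (le_INR 1); auto).
  assert (e1 : exp (- t) = exp (- t / INR n) ^ n).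
  { rewrite exp_pow_nat. f_equal. field. lra. }
  assert (e2 : exp t = exp (t / INR n) ^ n).
  { rewrite exp_pow_nat. f_equal. field. lra. }
  remember (INR n) as N eqn:HN.
  assert (q0 : 0 <= 1 - t / N).
  { apply (Rmult_le_reg_r N); [lra|]. unfold Rdiv. rewrite Rmult_minus_distr_r, Rmult_assoc, Rinv_l; lra. }
  assert (hA : (1 - t / N) ^ n <= exp (- t)).
  { rewrite e1. apply pow_incr. split; auto. pose proof (exp_ineq1_le (- t / N)). unfold Rdiv in *. lra. }
  assert (h1 : (1 + t / N) ^ n <= exp t).
  { rewrite e2. apply pow_incr. split. assert (0 <= t / N) by (unfold Rdiv; apply Rmult_le_pos; [lra|left; apply Rinv_0_lt_compat; lra]). lra.
    pose proof (exp_ineq1_le (t / N)). lra. }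
  assert (h2 : (1 + t / N) ^ n * (1 - t / N) ^ n = (1 + - ((t / N) ^ 2)) ^ n).
  { rewrite <- Rpow_mult_distr. f_equal. ring. }
  assert (h3 : 1 + N * (- ((t / N) ^ 2)) <= (1 + - ((t / N) ^ 2)) ^ n).
  { pose proof (bernoulli (- ((t / N) ^ 2)) n) as B. rewrite <- HN in B. apply B. assert ((t / N) ^ 2 <= 1); [|lra].
    assert (t / N <= 1) by lra. assert (0 <= t / N) by (unfold Rdiv; apply Rmult_le_pos; [lra|left; apply Rinv_0_lt_compat; lra]). nra. }
  replace (1 + N * - (t / N) ^ 2) with (1 - t ^ 2 / N) in h3 by (field; lra).
  assert (hA0 : 0 <= (1 - t / N) ^ n) by (apply pow_le; auto).
  assert (h4 : 1 - t ^ 2 / N <= exp t * (1 - t / N) ^ n) by nra.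
  assert (hE : exp t * exp (- t) = 1) by (rewrite <- exp_plus, Rplus_opp_r, exp_0; auto).
  assert (hE' : 0 < exp (- t)) by apply exp_pos.
  split. lra.
  assert (h5 : (1 - t ^ 2 / N) * exp (- t) <= (1 - t / N) ^ n).
  { apply Rle_trans with (exp t * (1 - t / N) ^ n * exp (- t)).
    apply Rmult_le_compat_r; lra. replace (exp t * (1 - t / N) ^ n * exp (- t)) with ((exp t * exp (- t)) * (1 - t / N) ^ n) by ring.
    rewrite hE; lra. }
  unfold Rdiv in *. nra.
Qed.

Definition hfun x (n : nat) := fun t => Rpower t (x - 1) * (1 - t / INR n) ^ n.

Lemma hfun_D x n t : (1 <= n)%nat -> 0 < t -> exists l, derivable_pt_lim (hfun x n) t l.
Proof.
  intros hn ht. eexists. unfold hfun. apply (D_mult (fun t => Rpower t (x - 1)) (fun t => (1 - t / INR n) ^ n)).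
  apply D_Rpower; auto.
  apply (D_comp (fun t => 1 - t / INR n) (fun u => u ^ n)).
  apply D_minus. apply D_const. apply derivable_pt_lim_div_scal, D_id. apply D_pow.
Qed.

Lemma gfun_le_shift x t c : 0 < c -> c <= t -> gfun x t <= gfun (x + 2) t / c ^ 2.
Proof.
  intros hc ht. unfold gfun. replace (x + 2 - 1) with ((x - 1) + INR 2) by (simpl; ring).
  rewrite Rpower_plus, Rpower_nat by lra.
  assert (0 < c ^ 2) by (apply pow_lt; lra).
  apply (Rmult_le_reg_r (c ^ 2)); auto.
  replace (Rpower t (x - 1) * t ^ 2 * exp (- t) / c ^ 2 * c ^ 2) with (Rpower t (x - 1) * t ^ 2 * exp (- t)) by (field; lra).
  assert (c ^ 2 <= t ^ 2) by (apply pow_incr; lra).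
  assert (0 < Rpower t (x - 1)) by apply Rpower_pos. assert (0 < exp (- t)) by apply exp_pos.
  replace (Rpower t (x - 1) * t ^ 2 * exp (- t)) with ((Rpower t (x - 1) * exp (- t)) * t ^ 2) by ring.
  apply Rmult_le_compat_l; [|lra]. apply Rmult_le_pos; lra.
Qed.

Lemma lag_subst x n a b : 0 < x -> (1 <= n)%nat -> 0 < a <= b -> b < 1 ->
  RI (hfun x n) (INR n * a) (INR n * b) = Rpower (INR n) x * RI (bfun x (INR n + 1)) a b.
Proof.
  intros hx hn hab hb. assert (hN : 1 <= INR n) by (apply (le_INR 1); auto).
  rewrite <- (RI_subst (hfun x n) (fun u => INR n * u) (fun _ => INR n)); try nra.
  - rewrite <- RI_scal; try lra. 2: apply bfun_on; lra.
    apply RI_ext; try lra.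
    + apply cont_on_D. intros u hu. destruct (hfun_D x n (INR n * u) hn ltac:(nra)) as [l Hl].
      eexists. apply (D_mult (fun u => hfun x n (INR n * u)) (fun _ => INR n)); [|apply D_const].
      apply (D_comp (fun u => INR n * u) (hfun x n)); [apply D_scal, D_id|exact Hl].
    + intros u hu. unfold hfun, bfun. rewrite Rpower_mul by lra.
      replace (INR n + 1 - 1) with (INR n) by ring. rewrite Rpower_nat by lra.
      replace (1 - INR n * u / INR n) with (1 - u) by (field; lra).
      rewrite (Rpower_split1 (INR n) x) by lra. ring.
  - intros t ht. apply (D_eq _ _ (INR n * 1)); [ring|]. apply D_scal, D_id.
  - intros t ht; nra.
  - apply cont_on_D. intros t ht. apply hfun_D; auto. nra.
  - apply cont_on_D. intros u hu. destruct (hfun_D x n (INR n * u) hn ltac:(nra)) as [l Hl].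
    eexists. apply (D_mult (fun u => hfun x n (INR n * u)) (fun _ => INR n)); [|apply D_const].
    apply (D_comp (fun u => INR n * u) (hfun x n)); [apply D_scal, D_id|exact Hl].
Qed.

Lemma lag_bound x n : 0 < x -> (1 <= n)%nat ->
  Rabs (Gamma x - Rpower (INR n) x * Bt x (INR n + 1)) <= 5 * Gamma (x + 2) / INR n.
Proof.
  intros hx hn. assert (hN : 1 <= INR n) by (apply (le_INR 1); auto).
  assert (hNx : 0 < Rpower (INR n) x) by apply Rpower_pos.
  assert (hG2 : 0 < Gamma (x + 2)) by (apply Gamma_pos; lra).
  destruct (Gamma_spec x hx) as [GI _]. destruct (Gamma_spec (x + 2) ltac:(lra)) as [_ G2le].
  destruct (Bt_spec x (INR n + 1) hx ltac:(lra)) as [BI _].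
  apply le_eps. intros e he.
  destruct (BI (e / 2 / Rpower (INR n) x)) as [dB [hdB KB]].
  { apply Rdiv_lt_0_compat; lra. }
  destruct (GI (e / 2) ltac:(lra)) as [dG [MG [hdG [hMG KG]]]].
  set (a := Rmin dB (dG / INR n) / 2).
  assert (ha0 : 0 < Rmin dB (dG / INR n)) by (apply Rmin_glb_lt; [lra|apply Rdiv_lt_0_compat; lra]).
  assert (ha1 : Rmin dB (dG / INR n) <= dB) by apply Rmin_l.
  assert (ha2 : Rmin dB (dG / INR n) <= dG / INR n) by apply Rmin_r.
  assert (haB : 0 < a < dB) by (unfold a; lra).
  assert (haG : 0 < INR n * a < dG).
  { split; [unfold a; nra|]. apply Rle_lt_trans with (INR n * (dG / INR n / 2)).
    apply Rmult_le_compat_l; unfold a; lra. replace (INR n * (dG / INR n / 2)) with (dG / 2) by (field; lra). lra. }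
  set (b := 1 - dB / 2).
  assert (hb : 1 - dB < b < 1) by (unfold b; lra).
  assert (hab : a <= b) by (unfold a, b; lra).
  assert (hb34 : 3/4 <= b) by (unfold b; lra).
  set (A := INR n * a). set (B := INR n * b).
  assert (hA0 : 0 < A) by (unfold A; lra).
  assert (hAB : A <= B) by (unfold A, B; nra).
  assert (hBN : B < INR n) by (unfold B; nra).
  assert (hB34 : 3 / 4 * INR n <= B) by (unfold B; nra).
  set (M := Rmax MG B + 1).
  assert (hM1 : MG < M) by (unfold M; pose proof (Rmax_l MG B); lra).
  assert (hM2 : B < M) by (unfold M; pose proof (Rmax_r MG B); lra).
  specialize (KB a b haB hb). specialize (KG A M haG hM1).
  assert (cg : cont_on (gfun x) A M) by (apply contpos_on; [apply gfun_cont|lra]).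
  assert (cg2 : cont_on (gfun (x + 2)) A M) by (apply contpos_on; [apply gfun_cont|lra]).
  assert (ch : cont_on (hfun x n) A B) by (apply cont_on_D; intros t ht; apply hfun_D; auto; lra).
  assert (E1 : RI (gfun x) A M = RI (gfun x) A B + RI (gfun x) B M) by (symmetry; apply RI_chasles; [lra|lra|exact cg]).
  assert (E2 : RI (hfun x n) A B = Rpower (INR n) x * RI (bfun x (INR n + 1)) a b) by (apply lag_subst; auto; lra).
  assert (T1 : 0 <= RI (gfun x) B M) by (apply RI_pos; [lra|eapply cont_on_sub; [exact cg| |]; lra|intros; apply gfun_pos]).
  assert (T2 : RI (gfun x) B M <= 4 * Gamma (x + 2) / INR n).
  { apply Rle_trans with (RI (fun t => / B ^ 2 * gfun (x + 2) t) B M).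
    - apply RI_le; try lra. eapply cont_on_sub; [exact cg| |]; lra.
      apply cont_on_scal; eapply cont_on_sub; [exact cg2| |]; lra.
      intros t ht. rewrite Rmult_comm. apply gfun_le_shift; lra.
    - rewrite RI_scal; try lra. 2: eapply cont_on_sub; [exact cg2| |]; lra.
      assert (RI (gfun (x + 2)) B M <= Gamma (x + 2)) by (apply G2le; lra).
      assert (0 < B ^ 2) by (apply pow_lt; lra).
      assert (/ B ^ 2 <= 4 / INR n).
      { unfold Rdiv. rewrite <- (Rinv_inv 4), <- Rinv_mult. apply Rinv_le_contravar. apply Rmult_lt_0_compat; [apply Rinv_0_lt_compat; lra| lra].
        simpl. rewrite Rmult_1_r. nra. }
      assert (0 < / B ^ 2) by (apply Rinv_0_lt_compat; lra).
      apply Rle_trans with (/ B ^ 2 * Gamma (x + 2)). apply Rmult_le_compat_l; lra.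
      unfold Rdiv in *. nra. }
  assert (D1 : 0 <= RI (gfun x) A B - RI (hfun x n) A B <= Gamma (x + 2) / INR n).
  { rewrite <- RI_minus; [| lra | eapply cont_on_sub; [exact cg| |]; lra | exact ch].
    split.
    - apply RI_pos; try lra. apply cont_on_minus; auto. eapply cont_on_sub; [exact cg| |]; lra.
      intros t ht. unfold gfun, hfun. destruct (lag_pt n t hn ltac:(lra)) as [L _].
      assert (0 < Rpower t (x - 1)) by apply Rpower_pos. nra.
    - apply Rle_trans with (RI (fun t => / INR n * gfun (x + 2) t) A B).
      + apply RI_le; try lra. apply cont_on_minus; auto. eapply cont_on_sub; [exact cg| |]; lra.
        apply cont_on_scal; eapply cont_on_sub; [exact cg2| |]; lra.
        intros t ht. unfold gfun, hfun. destruct (lag_pt n t hn ltac:(lra)) as [_ U].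
        replace (x + 2 - 1) with ((x - 1) + INR 2) by (simpl; ring).
        rewrite Rpower_plus, Rpower_nat by lra.
        assert (0 < Rpower t (x - 1)) by apply Rpower_pos.
        replace (Rpower t (x - 1) * exp (- t) - Rpower t (x - 1) * (1 - t / INR n) ^ n) with
          (Rpower t (x - 1) * (exp (- t) - (1 - t / INR n) ^ n)) by ring.
        replace (/ INR n * (Rpower t (x - 1) * t ^ 2 * exp (- t))) with (Rpower t (x - 1) * (t ^ 2 * exp (- t) / INR n)) by (field; lra).
        apply Rmult_le_compat_l; lra.
      + rewrite RI_scal; try lra. 2: eapply cont_on_sub; [exact cg2| |]; lra.
        assert (RI (gfun (x + 2)) A B <= Gamma (x + 2)) by (apply G2le; lra).
        assert (0 < / INR n) by (apply Rinv_0_lt_compat; lra). unfold Rdiv. nra. }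
  assert (KB' : Rabs (Rpower (INR n) x * RI (bfun x (INR n + 1)) a b - Rpower (INR n) x * Bt x (INR n + 1)) < e / 2).
  { rewrite <- Rmult_minus_distr_l, Rabs_mult, (Rabs_pos_eq (Rpower _ _)) by lra.
    apply (Rmult_lt_compat_l (Rpower (INR n) x)) in KB; auto.
    replace (Rpower (INR n) x * (e / 2 / Rpower (INR n) x)) with (e / 2) in KB by (field; lra). exact KB. }
  rewrite <- E2 in KB'.
  apply Rabs_def2 in KG. apply Rabs_def2 in KB'.
  apply Rabs_le. split; unfold Rdiv in *; lra.
Qed.

Lemma cv_ext_ev u v l : (forall n, (1 <= n)%nat -> u n = v n) -> Un_cv u l -> Un_cv v l.
Proof.
  intros E H e he. destruct (H e he) as [N HN]. exists (S N). intros n hn. rewrite <- E by lia. apply HN; lia.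
Qed.

Lemma poch_pos x k : 0 < x -> 0 < poch x k.
Proof. intros hx. induction k; simpl; [lra|]. pose proof (pos_INR k). nra. Qed.

Lemma poch_shift x n : poch x (S n) = x * poch (x + 1) n.
Proof.
  induction n.
  - simpl; ring.
  - change (poch x (S (S n))) with (poch x (S n) * (x + INR (S n))).
    rewrite IHn, S_INR. simpl. ring.
Qed.

Definition GS x n := Rpower (INR n) x * (INR (fact n) / poch x (S n)).

Lemma Gauss x : 0 < x -> Un_cv (GS x) (Gamma x).
Proof.
  intros hx. apply (cv_bound _ _ (5 * Gamma (x + 2))).
  intros n hn. unfold GS. rewrite <- Bt_nat by auto. rewrite Rabs_minus_sym. apply lag_bound; auto.
Qed.

Lemma cv_frac x c : 0 <= c -> Un_cv (fun n => INR n * x / (c + INR n)) x.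
Proof.
  intros hc. apply (cv_bound _ _ (Rabs x * c)). intros n hn.
  assert (hN : 1 <= INR n) by (apply (le_INR 1); auto).
  replace (INR n * x / (c + INR n) - x) with (- (x * c / (c + INR n))) by (field; lra).
  rewrite Rabs_Ropp. unfold Rdiv. rewrite !Rabs_mult, Rabs_inv, (Rabs_pos_eq c), (Rabs_pos_eq (c + INR n)) by lra.
  rewrite !Rmult_assoc. apply Rmult_le_compat_l; [apply Rabs_pos|]. apply Rmult_le_compat_l; [lra|].
  apply Rinv_le_contravar; lra.
Qed.

Lemma Gamma_succ x : 0 < x -> Gamma (x + 1) = x * Gamma x.
Proof.
  intros hx.
  assert (H1 : Un_cv (fun n => GS x n * (INR n * x / (x + 1 + INR n))) (Gamma x * x)).
  { apply cv_mult. apply Gauss; auto. apply cv_frac; lra. }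
  assert (H2 : Un_cv (GS (x + 1)) (Gamma x * x)).
  { eapply cv_ext_ev; [|exact H1]. intros n hn.
  assert (hN : 1 <= INR n) by (apply (le_INR 1); auto).
  unfold GS. rewrite (poch_shift x n). change (poch (x + 1) (S n)) with (poch (x + 1) n * (x + 1 + INR n)).
  rewrite (Rpower_split1 (INR n) (x + 1)) by lra. replace (x + 1 - 1) with x by ring.
  assert (0 < poch (x + 1) n) by (apply poch_pos; lra).
  assert (0 < INR (fact n)) by (apply lt_0_INR; apply lt_O_fact).
  simpl. field. lra. }
  rewrite Rmult_comm. apply (UL_sequence (GS (x + 1))); auto. apply Gauss; lra.
Qed.

Lemma Gamma_poch z k : 0 < z -> Gamma (z + INR k) = poch z k * Gamma z.
Proof.
  intros hz. induction k.
  - simpl. rewrite Rplus_0_r. ring.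
  - rewrite S_INR. replace (z + (INR k + 1)) with ((z + INR k) + 1) by ring.
    rewrite Gamma_succ by (pose proof (pos_INR k); lra). rewrite IHk. simpl. ring.
Qed.

Lemma Bt_shift x y n : 0 < x -> 0 < y -> Bt x y = poch (x + y) n / poch y n * Bt x (y + INR n).
Proof.
  intros hx hy. induction n.
  - simpl. rewrite Rplus_0_r. field.
  - rewrite IHn. rewrite S_INR. replace (y + (INR n + 1)) with ((y + INR n) + 1) by ring.
    pose proof (pos_INR n).
    rewrite Bt_rec by lra. simpl.
    assert (0 < poch (x + y) n) by (apply poch_pos; lra). assert (0 < poch y n) by (apply poch_pos; lra).
    field. repeat split; lra.
Qed.

Lemma Rpower_ratio a b x : 0 < a -> 0 < b -> Rpower (a / b) x * Rpower b x = Rpower a x.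
Proof.
  intros. rewrite Rpower_mult_distr by (try apply Rdiv_lt_0_compat; lra). f_equal. field. lra.
Qed.

Lemma Beta_Gamma x y : 0 < x -> 0 < y -> Bt x y = Gamma x * Gamma y / Gamma (x + y).
Proof.
  intros hx hy.
  destruct (nat_big y) as [K hK].
  set (U := fun n => Rpower (INR n) x * Bt x (INR n + 1)).
  assert (HU : Un_cv U (Gamma x)).
  { apply (cv_bound _ _ (5 * Gamma (x + 2))). intros n hn. unfold U. rewrite Rabs_minus_sym. apply lag_bound; auto. }
  set (L := fun n => Rpower (INR n) x * Bt x (INR (n + K) + 1)).
  assert (HL : Un_cv L (Gamma x)).
  { assert (A1 : Un_cv (fun n => INR n / INR (n + K)) 1).
    { apply (cv_bound _ _ (INR K)). intros n hn. assert (hN : 1 <= INR n) by (apply (le_INR 1); auto).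
      rewrite plus_INR. pose proof (pos_INR K).
      replace (INR n / (INR n + INR K) - 1) with (- (INR K / (INR n + INR K))) by (field; lra).
      rewrite Rabs_Ropp, Rabs_pos_eq by (unfold Rdiv; apply Rmult_le_pos; [lra|left; apply Rinv_0_lt_compat; lra]).
      unfold Rdiv. apply Rmult_le_compat_l; [lra|]. apply Rinv_le_contravar; lra. }
    assert (A2 : Un_cv (fun n => Rpower (INR n / INR (n + K)) x) 1).
    { rewrite <- (Rpower_one x). apply (continuity_seq (fun t => Rpower t x)); auto. apply cont_Rpower; lra. }
    assert (A3 : Un_cv (fun n => U (n + K)%nat) (Gamma x)) by (apply cv_shift; auto).
    assert (A4 := cv_mult _ _ _ _ A2 A3). rewrite Rmult_1_l in A4.
    eapply cv_ext_ev; [|exact A4]. intros n hn. unfold U, L.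
    assert (hN : 1 <= INR n) by (apply (le_INR 1); auto).
    assert (0 < INR (n + K)) by (rewrite plus_INR; pose proof (pos_INR K); lra).
    rewrite <- Rmult_assoc, Rpower_ratio; auto; lra. }
  set (V := fun n => Rpower (INR n) x * Bt x (y + INR (S n))).
  assert (HV : Un_cv V (Gamma x)).
  { apply (cv_squeeze L V U); auto. intros n. unfold L, V, U.
    assert (0 < Rpower (INR n) x) by apply Rpower_pos. pose proof (pos_INR n).
    split; apply Rmult_le_compat_l; try lra; apply Bt_anti; try lra; rewrite ?S_INR, ?plus_INR; lra. }
  assert (HW : Un_cv (fun n => GS y n * / GS (x + y) n * V n) (Gamma y * / Gamma (x + y) * Gamma x)).
  { apply cv_mult; auto. apply cv_mult. apply Gauss; auto. apply cv_inv. apply Gauss; lra.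
    apply Rgt_not_eq, Gamma_pos; lra. }
  replace (Gamma x * Gamma y / Gamma (x + y)) with (Gamma y * / Gamma (x + y) * Gamma x) by (unfold Rdiv; ring).
  apply cv_const. eapply cv_ext_ev; [|exact HW]. intros n hn. simpl.
  assert (hN : 1 <= INR n) by (apply (le_INR 1); auto).
  unfold GS, V. rewrite (Bt_shift x y (S n)) by auto.
  rewrite Rpower_plus.
  assert (0 < poch (x + y) (S n)) by (apply poch_pos; lra). assert (0 < poch y (S n)) by (apply poch_pos; lra).
  assert (0 < INR (fact n)) by (apply lt_0_INR; apply lt_O_fact).
  assert (0 < Rpower (INR n) x) by apply Rpower_pos. assert (0 < Rpower (INR n) y) by apply Rpower_pos.
  field. repeat split; lra.
Qed.

Definition jfun P Q := fun t => Rpower t (2 * P - 1) * Rpower (1 - t ^ 2) (Q - 1).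

Lemma jfun_D1 Q t : -1 < t < 1 -> exists l, derivable_pt_lim (fun t => Rpower (1 - t ^ 2) (Q - 1)) t l.
Proof.
  intros ht. eexists. apply D_Rpower_comp; [nra|]. apply D_minus; [apply D_const|apply D_pow].
Qed.

Lemma jfun_cont P Q : cont01 (jfun P Q).
Proof.
  intros t ht. unfold jfun. apply (continuity_pt_mult (fun t => Rpower t (2 * P - 1)) (fun t => Rpower (1 - t ^ 2) (Q - 1))).
  apply cont_Rpower; lra. destruct (jfun_D1 Q t ltac:(lra)) as [l Hl]. eapply D_cont; eauto.
Qed.

Lemma jfun_RI P Q a b : 0 < a <= b -> b < 1 -> RI (jfun P Q) a b = / 2 * RI (bfun P Q) (a ^ 2) (b ^ 2).
Proof.
  intros hab hb.
  assert (cb : cont_on (bfun P Q) (a ^ 2) (b ^ 2)) by (apply bfun_on; nra).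
  assert (cc : cont_on (fun t => bfun P Q (t ^ 2) * (2 * t)) a b).
  { apply cont_on_D. intros t ht. eexists.
    apply (D_mult (fun t => bfun P Q (t ^ 2)) (fun t => 2 * t)); [|apply D_scal, D_id].
    apply (D_comp (fun t => t ^ 2) (bfun P Q)). apply D_pow. unfold bfun.
    apply (D_mult (fun t => Rpower t (P - 1)) (fun t => Rpower (1 - t) (Q - 1))). apply D_Rpower; nra.
    apply D_Rpower_comp; [nra|]. apply D_minus; [apply D_const|apply D_id]. }
  rewrite <- (RI_subst (bfun P Q) (fun t => t ^ 2) (fun t => 2 * t)); auto; try nra.
  - rewrite <- RI_scal; try lra; auto. apply RI_ext; try lra.
    + apply cont01_on; auto; try lra. apply jfun_cont.
    + intros t ht. unfold jfun, bfun. rewrite Rpower_sq by lra.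
      replace (2 * P - 1) with (2 * (P - 1) + 1) by ring. rewrite Rpower_plus, Rpower_1 by lra. field.
  - intros t ht. apply (D_eq _ _ (INR 2 * t ^ 1)); [simpl; ring|apply D_pow].
  - intros t ht; split; apply pow_incr; lra.
Qed.

Lemma jfun_spec P Q : 0 < P -> 0 < Q -> imp01 (jfun P Q) (Bt P Q / 2) /\
  forall a b, 0 < a <= b -> b < 1 -> RI (jfun P Q) a b <= Bt P Q / 2.
Proof.
  intros hP hQ. destruct (Bt_spec P Q hP hQ) as [BI Ble]. split.
  - intros e he. destruct (BI (2 * e) ltac:(lra)) as [d [hd K]].
    exists (d / 2). split; [lra|]. intros a b ha hb.
    rewrite jfun_RI by lra.
    replace (/ 2 * RI (bfun P Q) (a ^ 2) (b ^ 2) - Bt P Q / 2) with (/ 2 * (RI (bfun P Q) (a ^ 2) (b ^ 2) - Bt P Q)) by field.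
    rewrite Rabs_mult, Rabs_pos_eq by lra.
    assert (Rabs (RI (bfun P Q) (a ^ 2) (b ^ 2) - Bt P Q) < 2 * e) by (apply K; split; nra).
    lra.
  - intros a b hab hb. rewrite jfun_RI by lra.
    assert (RI (bfun P Q) (a ^ 2) (b ^ 2) <= Bt P Q) by (apply Ble; nra). lra.
Qed.

Lemma Bt_anti1 p1 p2 q : 0 < p1 -> p1 <= p2 -> 0 < q -> Bt p2 q <= Bt p1 q.
Proof.
  intros hp h hq. apply (imp01_le (bfun p2 q) (bfun p1 q)); try apply bfun_cont; try apply Bt_spec; try lra.
  intros t ht. unfold bfun. apply Rmult_le_compat_r; [left; apply Rpower_pos|].
  unfold Rpower. apply exp_le. assert (ln t < 0) by (rewrite <- ln_1; apply ln_increasing; lra). nra.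
Qed.

Lemma fact_even k : INR (fact (2 * k)) = 4 ^ k * INR (fact k) * poch (1 / 2) k.
Proof.
  induction k.
  - simpl; ring.
  - replace (2 * S k)%nat with (S (S (2 * k))) by lia.
    rewrite !fact_simpl, !mult_INR, IHk. simpl poch. rewrite !S_INR, mult_INR. simpl. field.
Qed.

Lemma fact_odd k : INR (fact (2 * k + 1)) = 4 ^ k * INR (fact k) * poch (3 / 2) k.
Proof.
  induction k.
  - simpl; ring.
  - replace (2 * S k + 1)%nat with (S (S (2 * k + 1))) by lia.
    rewrite !fact_simpl, !mult_INR, IHk. simpl poch. rewrite !S_INR, plus_INR, mult_INR. simpl. field.
Qed.

Lemma sum_split g N : sum_f_R0 g (2 * N + 1) = sum_f_R0 (fun k => g (2 * k)%nat + g (2 * k + 1)%nat) N.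
Proof.
  induction N.
  - simpl. ring.
  - replace (2 * S N + 1)%nat with (S (S (2 * N + 1))) by lia.
    rewrite (tech5 g (S (2 * N + 1))), (tech5 g (2 * N + 1)), IHN.
    rewrite (tech5 (fun k => g (2 * k)%nat + g (2 * k + 1)%nat) N).
    replace (S (2 * N + 1)) with (2 * S N)%nat by lia.
    replace (S (2 * S N)) with (2 * S N + 1)%nat by lia. ring.
Qed.

Definition Tk a b1 b2 z k := poch a k / (poch b1 k * poch b2 k) * z ^ k / INR (fact k).

Lemma hyp_val a b1 b2 z l : infinite_sum (Tk a b1 b2 z) l -> hyp1F2 a b1 b2 z = l.
Proof.
  intros H. unfold hyp1F2.
  assert (H2 := epsilon_spec (inhabits 0) (fun l => infinite_sum (fun k => poch a k / (poch b1 k * poch b2 k) * z ^ k / INR (fact k)) l) (ex_intro _ l H)).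
  apply (UL_sequence (sum_f_R0 (Tk a b1 b2 z))); [exact H2| exact H].
Qed.

Lemma series_comp (A B : nat -> R) C : (forall n, 0 <= A n <= C * B n) -> 0 <= C ->
  {l | Un_cv (sum_f_R0 B) l} -> exists l, Un_cv (sum_f_R0 A) l.
Proof.
  intros H hC [l Hl].
  assert (X : {l | Un_cv (sum_f_R0 (fun n => B n * C)) l}).
  { exists (l * C). apply (cv_ext (fun N => sum_f_R0 B N * C)). intros; rewrite <- scal_sum; ring.
    apply (cv_mult (sum_f_R0 B) (fun _ => C)); auto.
    intros e he; exists O; intros; unfold R_dist. rewrite Rminus_diag, Rabs_R0; auto. }
  destruct (Rseries_CV_comp A (fun n => B n * C)) as [l' Hl']; auto.
  intros n; specialize (H n); lra. exists l'; auto.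
Qed.

Lemma exp_series (y : R) : {l | Un_cv (sum_f_R0 (fun k => y ^ k / INR (fact k))) l}.
Proof.
  destruct (exist_exp y) as [l Hl]. exists l. apply (cv_ext (sum_f_R0 (fun i => / INR (fact i) * y ^ i))).
  intros N; apply sum_eq; intros; unfold Rdiv; ring. exact Hl.
Qed.

Lemma exp_cv x : Un_cv (sum_f_R0 (fun i => / INR (fact i) * x ^ i)) (exp x).
Proof. exact (proj2_sig (exist_exp x)). Qed.

Lemma sum_tail_le (al be : nat -> R) M j : (forall n, Rabs (al n) <= be n) ->
  Rabs (sum_f_R0 al (M + j) - sum_f_R0 al M) <= sum_f_R0 be (M + j) - sum_f_R0 be M.
Proof.
  intros H. induction j.
  - rewrite Nat.add_0_r, !Rminus_diag, Rabs_R0. lra.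
  - replace (M + S j)%nat with (S (M + j)) by lia. rewrite !tech5.
    replace (sum_f_R0 al (M + j) + al (S (M + j)) - sum_f_R0 al M) with
      ((sum_f_R0 al (M + j) - sum_f_R0 al M) + al (S (M + j))) by ring.
    eapply Rle_trans; [apply Rabs_triang|]. specialize (H (S (M + j))). lra.
Qed.

Lemma exp_tail y t M : 0 <= y -> 0 <= t <= 1 ->
  Rabs (exp (- (y * t)) - sum_f_R0 (fun n => (- y) ^ n / INR (fact n) * t ^ n) M)
    <= exp y - sum_f_R0 (fun i => / INR (fact i) * y ^ i) M.
Proof.
  intros hy ht.
  set (al := fun i => / INR (fact i) * (- (y * t)) ^ i).
  set (be := fun i => / INR (fact i) * y ^ i).
  assert (E : sum_f_R0 (fun n => (- y) ^ n / INR (fact n) * t ^ n) M = sum_f_R0 al M).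
  { apply sum_eq. intros i _. unfold al. replace (- (y * t)) with ((- y) * t) by ring.
    rewrite Rpow_mult_distr. unfold Rdiv; ring. }
  rewrite E.
  assert (Hab : forall n, Rabs (al n) <= be n).
  { intros n. unfold al, be. rewrite Rabs_mult, Rabs_inv, (Rabs_pos_eq (INR _)) by apply pos_INR.
    apply Rmult_le_compat_l. left; apply Rinv_0_lt_compat, lt_0_INR, lt_O_fact.
    rewrite <- RPow_abs. apply pow_incr. split; [apply Rabs_pos|].
    rewrite Rabs_Ropp, Rabs_mult, !Rabs_pos_eq by lra. nra. }
  assert (C1 : Un_cv (fun j => sum_f_R0 al (M + j)) (exp (- (y * t)))).
  { apply (cv_ext (fun j => sum_f_R0 al (j + M))). intros; rewrite Nat.add_comm; auto.
    apply cv_shift. apply exp_cv. }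
  assert (C2 : Un_cv (fun j => sum_f_R0 be (M + j)) (exp y)).
  { apply (cv_ext (fun j => sum_f_R0 be (j + M))). intros; rewrite Nat.add_comm; auto.
    apply cv_shift. apply exp_cv. }
  assert (K : forall c, Un_cv (fun _ : nat => c) c).
  { intros c e he; exists O; intros; unfold R_dist. rewrite Rminus_diag, Rabs_R0; auto. }
  apply Rle_cv_lim with (Un := fun j => Rabs (sum_f_R0 al (M + j) - sum_f_R0 al M))
                    (Vn := fun j => sum_f_R0 be (M + j) - sum_f_R0 be M).
  - intros j. apply sum_tail_le; auto.
  - apply cv_cvabs. apply (CV_minus _ (fun _ => sum_f_R0 al M)); auto.
  - apply (CV_minus _ (fun _ => sum_f_R0 be M)); auto.
Qed.

Lemma cont_on_sum (g : nat -> R -> R) a b M : (forall n, cont_on (g n) a b) ->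
  cont_on (fun t => sum_f_R0 (fun n => g n t) M) a b.
Proof.
  intros H. induction M; simpl.
  - apply H.
  - apply cont_on_plus; auto.
Qed.

Lemma RI_sum (g : nat -> R -> R) a b M : a <= b -> (forall n, cont_on (g n) a b) ->
  RI (fun t => sum_f_R0 (fun n => g n t) M) a b = sum_f_R0 (fun n => RI (g n) a b) M.
Proof.
  intros hab H. induction M; simpl.
  - reflexivity.
  - rewrite RI_plus; auto. rewrite IHM; auto. apply cont_on_sum; auto.
Qed.

Lemma uniform_delta (g : nat -> R -> R) (l : nat -> R) : (forall n, imp01 (g n) (l n)) ->
  forall M eta, 0 < eta -> exists d, 0 < d <= 1/2 /\ forall a b, 0 < a < d -> 1 - d < b < 1 ->
    forall n, (n <= M)%nat -> Rabs (RI (g n) a b - l n) < eta.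
Proof.
  intros H M eta he. induction M.
  - destruct (H O eta he) as [d [hd K]]. exists d; split; auto. intros a b ha hb n hn.
    replace n with O by lia. auto.
  - destruct IHM as [d1 [hd1 K1]]. destruct (H (S M) eta he) as [d2 [hd2 K2]].
    exists (Rmin d1 d2). split. split; [apply Rmin_glb_lt; lra| pose proof (Rmin_l d1 d2); lra].
    intros a b ha hb n hn. pose proof (Rmin_l d1 d2). pose proof (Rmin_r d1 d2).
    destruct (Nat.eq_dec n (S M)) as [->|ne].
    + apply K2; lra.
    + apply K1; try lra; lia.
Qed.

Lemma cont_exp_neg y a b : cont_on (fun t => exp (- (y * t))) a b.
Proof.
  intros t ht. apply (cont_pt_ext (fun t => exp ((- y) * t))). intros; f_equal; ring. apply cont_exp_lin.
Qed.

Lemma cont_on_pow n a b : cont_on (fun t => t ^ n) a b.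
Proof. intros t ht. eapply D_cont. apply D_pow. Qed.

Lemma main_series (w : R -> R) (J : nat -> R) (J0 y L : R) :
  cont01 w -> (forall t, 0 < t < 1 -> 0 <= w t) -> 0 <= y ->
  (forall n, imp01 (fun t => w t * t ^ n) (J n)) ->
  (forall a b, 0 < a <= b -> b < 1 -> RI w a b <= J0) ->
  Un_cv (fun N => sum_f_R0 (fun n => (- y) ^ n / INR (fact n) * J n) (2 * N + 1)) L ->
  imp01 (fun t => w t * exp (- (y * t))) L.
Proof.
  intros hw hw0 hy HJ HJ0 HL e he.
  assert (hJ0 : 0 <= J0).
  { apply Rle_trans with (RI w (1/2) (1/2)); [|apply HJ0; lra]. apply RI_pos; [lra| apply cont01_on; auto; lra|intros; lra]. }
  set (c := fun n => (- y) ^ n / INR (fact n)).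
  set (Y := fun M => sum_f_R0 (fun i => / INR (fact i) * y ^ i) M).
  assert (HY : Un_cv Y (exp y)) by apply exp_cv.
  assert (he3 : 0 < e / 3) by lra.
  destruct (HL _ he3) as [N1 HN1].
  assert (he4 : 0 < e / (3 * (J0 + 1))) by (apply Rdiv_lt_0_compat; lra).
  destruct (HY _ he4) as [N2 HN2].
  set (M := (2 * max N1 N2 + 1)%nat).
  specialize (HN1 (max N1 N2) ltac:(lia)). specialize (HN2 M ltac:(unfold M; lia)).
  unfold R_dist in HN1, HN2. fold c in HN1.
  set (Yc := sum_f_R0 (fun n => Rabs (c n)) M).
  assert (hYc : 0 <= Yc) by (apply cond_pos_sum; intros; apply Rabs_pos).
  set (eta := e / (3 * (Yc + 1))).
  assert (heta : 0 < eta) by (apply Rdiv_lt_0_compat; lra).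
  destruct (uniform_delta (fun n t => w t * t ^ n) J HJ M eta heta) as [d [hd Hd]].
  exists d; split; auto. intros a b ha hb.
  specialize (Hd a b ha hb).
  assert (hab : a <= b) by lra.
  assert (cw : cont_on w a b) by (apply cont01_on; auto; lra).
  assert (cg : forall n, cont_on (fun t => w t * t ^ n) a b) by (intros; apply cont_on_mult; auto; apply cont_on_pow).
  set (E := fun t => sum_f_R0 (fun n => c n * t ^ n) M).
  assert (cE : cont_on E a b) by (apply cont_on_sum; intros; apply cont_on_scal, cont_on_pow).
  assert (S1 : RI (fun t => w t * exp (- (y * t))) a b =
               RI (fun t => sum_f_R0 (fun n => c n * (w t * t ^ n)) M) a b + RI (fun t => w t * (exp (- (y * t)) - E t)) a b).
  { rewrite <- RI_plus; auto. 2: apply cont_on_sum; intros; apply cont_on_scal; auto.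
    2: apply cont_on_mult; auto; apply cont_on_minus; auto; apply cont_exp_neg.
    f_equal. apply functional_extensionality. intros t. unfold E.
    replace (sum_f_R0 (fun n => c n * (w t * t ^ n)) M) with (w t * sum_f_R0 (fun n => c n * t ^ n) M).
    ring. rewrite scal_sum. apply sum_eq; intros; ring. }
  assert (S2 : RI (fun t => sum_f_R0 (fun n => c n * (w t * t ^ n)) M) a b = sum_f_R0 (fun n => c n * RI (fun t => w t * t ^ n) a b) M).
  { rewrite (RI_sum (fun n t => c n * (w t * t ^ n))); auto. apply sum_eq; intros. apply RI_scal; auto.
    intros; apply cont_on_scal; auto. }
  assert (S3 : Rabs (RI (fun t => w t * (exp (- (y * t)) - E t)) a b) <= (exp y - Y M) * J0).
  { eapply Rle_trans. apply RI_abs; auto. apply cont_on_mult; auto; apply cont_on_minus; auto; apply cont_exp_neg.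
    apply Rle_trans with (RI (fun t => (exp y - Y M) * w t) a b).
    - apply RI_le; auto. apply cont_on_abs, cont_on_mult; auto; apply cont_on_minus; auto; apply cont_exp_neg.
      apply cont_on_scal; auto.
      intros t ht. rewrite Rabs_mult, (Rabs_pos_eq (w t)) by (apply hw0; lra). rewrite Rmult_comm.
      apply Rmult_le_compat_r; [apply hw0; lra|]. unfold E, c. apply exp_tail; auto; lra.
    - rewrite RI_scal; auto. assert (RI w a b <= J0) by (apply HJ0; lra).
      assert (0 <= exp y - Y M).
      { unfold Y. pose proof (exp_tail y 0 M hy ltac:(lra)). pose proof (Rabs_pos (exp (- (y * 0)) - sum_f_R0 (fun n => (- y) ^ n / INR (fact n) * 0 ^ n) M)). lra. }
      apply Rmult_le_compat_l; auto. }
  assert (S4 : Rabs (sum_f_R0 (fun n => c n * RI (fun t => w t * t ^ n) a b) M - sum_f_R0 (fun n => c n * J n) M) <= eta * Yc).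
  { rewrite <- minus_sum. eapply Rle_trans; [apply sum_f_R0_triangle|].
    unfold Yc. rewrite scal_sum. apply sum_Rle. intros n hn.
    replace (c n * RI (fun t => w t * t ^ n) a b - c n * J n) with (c n * (RI (fun t => w t * t ^ n) a b - J n)) by ring.
    rewrite Rabs_mult. apply Rmult_le_compat_l; [apply Rabs_pos|]. left; apply Hd; auto. }
  assert (S5 : eta * Yc < e / 3).
  { apply Rlt_le_trans with (eta * (Yc + 1)).
    apply Rmult_lt_compat_l; [exact heta|lra]. unfold eta. right; field; lra. }
  assert (S6 : (exp y - Y M) * J0 < e / 3).
  { rewrite Rabs_minus_sym in HN2. apply Rabs_def2 in HN2.
    apply Rle_lt_trans with (e / (3 * (J0 + 1)) * J0).
    apply Rmult_le_compat_r; lra.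
    apply Rlt_le_trans with (e / (3 * (J0 + 1)) * (J0 + 1)). apply Rmult_lt_compat_l; lra.
    right; field; lra. }
  rewrite S1, S2.
  replace (sum_f_R0 (fun n => c n * RI (fun t => w t * t ^ n) a b) M + RI (fun t => w t * (exp (- (y * t)) - E t)) a b - L)
    with ((sum_f_R0 (fun n => c n * RI (fun t => w t * t ^ n) a b) M - sum_f_R0 (fun n => c n * J n) M)
          + RI (fun t => w t * (exp (- (y * t)) - E t)) a b + (sum_f_R0 (fun n => c n * J n) M - L)) by ring.
  eapply Rle_lt_trans. apply Rabs_triang. eapply Rle_lt_trans. apply Rplus_le_compat_r, Rabs_triang.
  assert (HN1' : Rabs (sum_f_R0 (fun n => c n * J n) M - L) < e / 3) by exact HN1.
  lra.
Qed.

Lemma Bt_gamma_shift p0 q k : 0 < p0 -> 0 < q ->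
  Bt (p0 + INR k) q = poch p0 k * Gamma p0 * Gamma q / (poch (p0 + q) k * Gamma (p0 + q)).
Proof.
  intros hp hq. pose proof (pos_INR k).
  rewrite Beta_Gamma by lra. rewrite Gamma_poch by lra.
  replace (p0 + INR k + q) with ((p0 + q) + INR k) by ring. rewrite Gamma_poch by lra. reflexivity.
Qed.

Lemma core p0 q y z : 0 < p0 -> 0 < q -> 0 <= y -> z = y ^ 2 / 4 ->
  imp01 (fun t => jfun p0 q t * exp (- (y * t)))
    (Gamma q * Gamma p0 / (2 * Gamma (p0 + q)) * hyp1F2 p0 (1/2) (p0 + q) z
     - y * (Gamma q * Gamma (p0 + 1/2) / (2 * Gamma (p0 + q + 1/2))) * hyp1F2 (p0 + 1/2) (3/2) (p0 + q + 1/2) z).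
Proof.
  intros hp hq hy hz.
  set (J := fun n : nat => Bt (p0 + INR n / 2) q / 2).
  set (A1 := Gamma q * Gamma p0 / (2 * Gamma (p0 + q))).
  set (A2 := Gamma q * Gamma (p0 + 1/2) / (2 * Gamma (p0 + q + 1/2))).
  set (T1 := Tk p0 (1/2) (p0 + q) z). set (T2 := Tk (p0 + 1/2) (3/2) (p0 + q + 1/2) z).
  assert (gq := Gamma_pos q hq). assert (gp := Gamma_pos p0 hp).
  assert (gp2 := Gamma_pos (p0 + 1/2) ltac:(lra)).
  assert (gpq := Gamma_pos (p0 + q) ltac:(lra)). assert (gpq2 := Gamma_pos (p0 + q + 1/2) ltac:(lra)).
  assert (hA1 : 0 < A1) by (unfold A1; apply Rdiv_lt_0_compat; nra).
  assert (hA2 : 0 < A2) by (unfold A2; apply Rdiv_lt_0_compat; nra).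
  assert (hz0 : 0 <= z) by (rewrite hz; nra).
  assert (y2 : y ^ 2 = 4 * z) by (rewrite hz; field).
  assert (E1 : forall k, (- y) ^ (2 * k) / INR (fact (2 * k)) * J (2 * k)%nat = A1 * T1 k).
  { intros k. unfold J, A1, T1, Tk.
    rewrite pow_mult. replace ((- y) ^ 2) with (4 * z) by (rewrite <- y2; ring).
    rewrite Rpow_mult_distr, fact_even. rewrite mult_INR. replace (INR 2 * INR k / 2) with (INR k) by (simpl; field).
    rewrite Bt_gamma_shift by auto.
    assert (0 < poch (1/2) k) by (apply poch_pos; lra). assert (0 < poch (p0 + q) k) by (apply poch_pos; lra).
    assert (0 < INR (fact k)) by (apply lt_0_INR, lt_O_fact). assert (0 < 4 ^ k) by (apply pow_lt; lra).
    field. repeat split; lra. }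
  assert (E2' : forall k, (y ^ 2) ^ k / INR (fact (2 * k + 1)) * J (2 * k + 1)%nat = A2 * T2 k).
  { intros k. unfold J, A2, T2, Tk.
    rewrite y2.
    rewrite Rpow_mult_distr, fact_odd. rewrite plus_INR, mult_INR.
    replace (p0 + (INR 2 * INR k + INR 1) / 2) with ((p0 + 1/2) + INR k) by (simpl; field).
    rewrite Bt_gamma_shift by lra.
    replace (p0 + 1 / 2 + q) with (p0 + q + 1/2) by ring.
    assert (0 < poch (3/2) k) by (apply poch_pos; lra). assert (0 < poch (p0 + q + 1/2) k) by (apply poch_pos; lra).
    assert (0 < INR (fact k)) by (apply lt_0_INR, lt_O_fact). assert (0 < 4 ^ k) by (apply pow_lt; lra).
    field. repeat split; lra. }
  assert (E2 : forall k, (- y) ^ (2 * k + 1) / INR (fact (2 * k + 1)) * J (2 * k + 1)%nat = - y * (A2 * T2 k)).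
  { intros k. rewrite <- E2'. rewrite pow_add, pow_mult. replace ((- y) ^ 2) with (y ^ 2) by ring. simpl. unfold Rdiv. ring. }
  assert (HJ0 : forall n, 0 <= J n <= Bt p0 q / 2).
  { intros n. unfold J. pose proof (pos_INR n).
    assert (0 <= Bt (p0 + INR n / 2) q) by (apply Bt_pos; lra).
    assert (Bt (p0 + INR n / 2) q <= Bt p0 q) by (apply Bt_anti1; lra). lra. }
  assert (Bexp : {l | Un_cv (sum_f_R0 (fun k => (y ^ 2) ^ k / INR (fact k))) l}) by apply exp_series.
  assert (fk : forall k, INR (fact k) <= INR (fact (2 * k))) by (intros; apply le_INR, fact_le; lia).
  assert (fk' : forall k, INR (fact k) <= INR (fact (2 * k + 1))) by (intros; apply le_INR, fact_le; lia).
  assert (Tpos : forall a b1 b2 k, 0 < a -> 0 < b1 -> 0 < b2 -> 0 <= Tk a b1 b2 z k).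
  { intros. unfold Tk. assert (0 < poch a k) by (apply poch_pos; lra). assert (0 < poch b1 k) by (apply poch_pos; lra).
    assert (0 < poch b2 k) by (apply poch_pos; lra). assert (0 < INR (fact k)) by (apply lt_0_INR, lt_O_fact).
    assert (0 <= z ^ k) by (apply pow_le; lra).
    unfold Rdiv. apply Rmult_le_pos; [|left; apply Rinv_0_lt_compat; lra].
    apply Rmult_le_pos; auto. apply Rmult_le_pos; [lra|]. left; apply Rinv_0_lt_compat; nra. }
  assert (ypow : forall k, (- y) ^ (2 * k) = (y ^ 2) ^ k) by (intros; rewrite pow_mult; f_equal; ring).
  assert (frac_le : forall k j, (INR (fact k) <= INR (fact j)) -> 0 <= J j ->
      (y ^ 2) ^ k / INR (fact j) * J j <= (y ^ 2) ^ k / INR (fact k) * (Bt p0 q / 2)).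
  { intros k j hf hJ. assert (0 < INR (fact k)) by (apply lt_0_INR, lt_O_fact).
    assert (0 <= (y ^ 2) ^ k) by (apply pow_le; nra).
    assert (J j <= Bt p0 q / 2) by apply HJ0.
    unfold Rdiv. apply Rmult_le_compat; try lra.
    - apply Rmult_le_pos; auto. left; apply Rinv_0_lt_compat; lra.
    - apply Rmult_le_compat_l; auto. apply Rinv_le_contravar; lra. }
  assert (C1 : exists H1, Un_cv (sum_f_R0 T1) H1).
  { apply (series_comp T1 (fun k => (y ^ 2) ^ k / INR (fact k)) (Bt p0 q / 2 / A1)); auto.
    - intros k. split. apply Tpos; lra.
      replace (T1 k) with ((- y) ^ (2 * k) / INR (fact (2 * k)) * J (2 * k)%nat / A1) by (rewrite E1; field; lra).
      rewrite ypow. apply (Rmult_le_reg_r A1); auto. unfold Rdiv at 1. rewrite Rmult_assoc, Rinv_l, Rmult_1_r by lra.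
      replace (Bt p0 q / 2 / A1 * ((y ^ 2) ^ k / INR (fact k)) * A1) with ((y ^ 2) ^ k / INR (fact k) * (Bt p0 q / 2)) by (field; split; try lra; try apply INR_fact_neq_0).
      apply frac_le; auto. apply HJ0.
    - unfold Rdiv. apply Rmult_le_pos; [pose proof (HJ0 O); lra| left; apply Rinv_0_lt_compat; lra]. }
  assert (C2 : exists H2, Un_cv (sum_f_R0 T2) H2).
  { apply (series_comp T2 (fun k => (y ^ 2) ^ k / INR (fact k)) (Bt p0 q / 2 / A2)); auto.
    - intros k. split. apply Tpos; lra.
      replace (T2 k) with ((y ^ 2) ^ k / INR (fact (2 * k + 1)) * J (2 * k + 1)%nat / A2) by (rewrite E2'; field; lra).
      apply (Rmult_le_reg_r A2); auto. unfold Rdiv at 1. rewrite Rmult_assoc, Rinv_l, Rmult_1_r by lra.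
      replace (Bt p0 q / 2 / A2 * ((y ^ 2) ^ k / INR (fact k)) * A2) with ((y ^ 2) ^ k / INR (fact k) * (Bt p0 q / 2)) by (field; split; try lra; try apply INR_fact_neq_0).
      apply frac_le; auto. apply HJ0.
    - unfold Rdiv. apply Rmult_le_pos; [pose proof (HJ0 O); lra| left; apply Rinv_0_lt_compat; lra]. }
  destruct C1 as [H1 HH1]. destruct C2 as [H2 HH2].
  rewrite (hyp_val _ _ _ _ H1 HH1), (hyp_val _ _ _ _ H2 HH2). fold A1 A2.
  apply (main_series (jfun p0 q) J (Bt p0 q / 2) y).
  - apply jfun_cont.
  - intros t ht. unfold jfun. apply Rmult_le_pos; left; apply Rpower_pos.
  - exact hy.
  - intros n. unfold J. pose proof (pos_INR n).
    apply (imp01_ext (jfun (p0 + INR n / 2) q)). apply jfun_cont.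
    intros t ht. unfold jfun. replace (2 * (p0 + INR n / 2) - 1) with ((2 * p0 - 1) + INR n) by field.
    rewrite Rpower_plus, Rpower_nat by lra. ring.
    apply jfun_spec; lra.
  - intros a b hab hb. apply jfun_spec; auto.
  - apply (cv_ext (fun N => A1 * sum_f_R0 T1 N + (- y * A2) * sum_f_R0 T2 N)).
    + intros N. rewrite sum_split. rewrite !scal_sum, <- sum_plus. apply sum_eq. intros k _.
      rewrite E1, E2. ring.
    + replace (A1 * H1 - y * A2 * H2) with (A1 * H1 + (- y * A2) * H2) by ring.
      apply CV_plus; apply (cv_mult (fun _ => _)); auto; intros e he; exists O; intros; unfold R_dist; rewrite Rminus_diag, Rabs_R0; auto.
Qed.

Theorem mainTheorem7 (m eps : R) (hm : 0 < m) (h1 : m + 2 * eps > 2) (h2 : eps < 2) :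
  forall v : R,
    exists I : R,
      improper_int_0_1
        (fun t => Rpower t (1 - eps) * Rpower (1 - t ^ 2) ((m - 6 + 2 * eps) / 4)
                  * exp (- t * v ^ 2 / 4)) I /\
      Phi m eps v =
        Rpower 2 (- m - 1) * Rpower PI ((2 * eps - 6 - m) / 4)
          / Gamma ((m - 2 + 2 * eps) / 4) * I.
Proof.
  intros v.
  assert (hp : 0 < 1 - eps / 2) by lra.
  assert (hq : 0 < (m - 2 + 2 * eps) / 4) by lra.
  assert (hy : 0 <= v ^ 2 / 4) by nra.
  pose proof (core (1 - eps / 2) ((m - 2 + 2 * eps) / 4) (v ^ 2 / 4) (v ^ 4 / 64) hp hq hy ltac:(field)) as C.
  eexists. split.
  - assert (Ef : (fun t => Rpower t (1 - eps) * Rpower (1 - t ^ 2) ((m - 6 + 2 * eps) / 4) * exp (- t * v ^ 2 / 4))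
               = (fun t => jfun (1 - eps / 2) ((m - 2 + 2 * eps) / 4) t * exp (- (v ^ 2 / 4 * t)))).
    { apply functional_extensionality; intro t. unfold jfun.
      replace (2 * (1 - eps / 2) - 1) with (1 - eps) by field.
      replace ((m - 2 + 2 * eps) / 4 - 1) with ((m - 6 + 2 * eps) / 4) by field.
      replace (- (v ^ 2 / 4 * t)) with (- t * v ^ 2 / 4) by field. reflexivity. }
    rewrite Ef. apply imp01_to; [|exact C].
    intros t ht. apply (continuity_pt_mult (jfun _ _) (fun t => exp (- (v ^ 2 / 4 * t)))).
    apply jfun_cont; auto. apply (cont_pt_ext (fun t => exp ((- (v ^ 2 / 4)) * t))). intros; f_equal; ring. apply cont_exp_lin.
  - unfold Phi.
    replace ((m + 2) / 4) with (1 - eps / 2 + (m - 2 + 2 * eps) / 4) by field.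
    replace ((3 - eps) / 2) with (1 - eps / 2 + 1 / 2) by field.
    replace (1 + m / 4) with (1 - eps / 2 + (m - 2 + 2 * eps) / 4 + 1 / 2) by field.
    set (H1 := hyp1F2 (1 - eps / 2) (1 / 2) (1 - eps / 2 + (m - 2 + 2 * eps) / 4) (v ^ 4 / 64)).
    set (H2 := hyp1F2 (1 - eps / 2 + 1 / 2) (3 / 2) (1 - eps / 2 + (m - 2 + 2 * eps) / 4 + 1 / 2) (v ^ 4 / 64)).
    assert (g1 := Gamma_pos ((m - 2 + 2 * eps) / 4) hq).
    assert (g2 := Gamma_pos (1 - eps / 2 + (m - 2 + 2 * eps) / 4) ltac:(lra)).
    assert (g3 := Gamma_pos (1 - eps / 2 + (m - 2 + 2 * eps) / 4 + 1 / 2) ltac:(lra)).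
    assert (R2 : Rpower 2 (- m - 1) = 2 / Rpower 2 (2 + m)).
    { assert (Rpower 2 (- m - 1) * Rpower 2 (2 + m) = 2).
      { rewrite <- Rpower_plus. replace (- m - 1 + (2 + m)) with 1 by ring. apply Rpower_1; lra. }
      assert (0 < Rpower 2 (2 + m)) by apply Rpower_pos.
      apply (Rmult_eq_reg_r (Rpower 2 (2 + m))); [|lra]. rewrite H. field. lra. }
    assert (RP : Rpower PI ((2 * eps - 6 - m) / 4) = / Rpower PI ((6 + m - 2 * eps) / 4)).
    { rewrite <- Rpower_Ropp. f_equal. field. }
    rewrite R2, RP.
    assert (0 < Rpower 2 (2 + m)) by apply Rpower_pos. assert (0 < Rpower PI ((6 + m - 2 * eps) / 4)) by apply Rpower_pos.
    field. repeat split; lra.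
Qed.
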